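(* Let $s_0\in(0,1)$, $0<\iota<\min\{s_0,1/3\}$, let $\omega$ satisfy condition (M) with parameter $\iota$ and in addition the $2s_0$-Dini condition, let $f(t)=t\omega(t)$ and $C>0$. Then there exists $t_0>0$ such that for every $s\in[s_0,1)$ there is a function $\zeta:[0,\infty)\to[0,\infty)$ with $\zeta\in C([0,\infty))\cap C^2((0,\infty))\cap C^3((0,2))$ satisfying (Z0)–(Z4) (for this $s$) and, for all $0<t<t_0$, $$C\Big(t^s+\omega(t)+\frac{\omega(f^{-1}(t))^{2s}-\omega(f^{-1}(t))}{1-2s}\Big)\le t\zeta'(t)\quad(s\neq1/2),$$ $$C\Big(t^{1/2}+\omega(t)+\omega(f^{-1}(t))\ln\frac{1}{\omega(f^{-1}(t))}\Big)\le t\zeta'(t)\quad(s=1/2).$$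
   Context: Condition (M) with parameter $\iota$: $\omega:[0,\infty)\to[0,\infty)$ is continuous, increasing and concave, $C^2$ on $(0,\infty)$, $\omega(0)=0$, $\int_0^1\omega(t)/t\,dt<\infty$, $\lim_{t\to\infty}\omega(t)/t$ finite, and there is $t_0>0$ with $\omega(t)/t^\iota$ decreasing on $(0,t_0)$ and $t^2\omega''(t)\ge-\omega(t)-3t\omega'(t)$ on $(0,t_0)$. The $2s$-Dini condition: $\int_0^1\frac{\omega(t)}{t}\frac{\omega(t)^{2s-1}-\omega(1)^{2s-1}}{1-2s}dt<\infty$ for $s\ne1/2$, and $\int_0^1\frac{\omega(t)}{t}\ln\frac{\omega(1)}{\omega(t)}dt<\infty$ for $s=1/2$. (Z0): $\zeta$ positive on $(0,\infty)$, increasing, concave, $\zeta(0)=0$. (Z1): there are $c_1>0$, $t_0\in(0,1)$ with $t^2\zeta'''(t)\ge-c_1\zeta'(t)$ for $0<t<t_0$. (Z2): $t\mapsto t\zeta'(t)$ nondecreasing on $(0,\infty)$. (Z3): there are $\iota>0$, $t_0>0$ such that $\zeta(t)/t^\iota$ is decreasing on $(0,t_0]$. (Z4): there is $c_2>0$ with $\zeta(t)\le c_2(1+t)^{s/2}$ for $t\ge0$. *)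

(* Defs.v *)
From Stdlib Require Import Reals Lra.
From Coquelicot Require Import Coquelicot.
Open Scope R_scope.

(* Functions are R -> R; only their values on [0,oo) matter. *)

Definition cont_on_nonneg (f : R -> R) : Prop :=
  forall t, 0 <= t -> filterlim f (within (fun y => 0 <= y) (locally t)) (locally (f t)).

Definition Ck_on (k : nat) (f : R -> R) (I : R -> Prop) : Prop :=
  (forall x, I x -> forall m, (m <= k)%nat -> ex_derive_n f m x) /\
  (forall x, I x -> continuous (Derive_n f k) x).

(* "increasing" = nondecreasing, "decreasing" = nonincreasing (on a set) *)
Definition nondecr_on (f : R -> R) (I : R -> Prop) : Prop :=
  forall x y, I x -> I y -> x <= y -> f x <= f y.
Definition nonincr_on (f : R -> R) (I : R -> Prop) : Prop :=
  forall x y, I x -> I y -> x <= y -> f y <= f x.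

Definition concave_on_nonneg (f : R -> R) : Prop :=
  forall x y l, 0 <= x -> 0 <= y -> 0 <= l <= 1 ->
    l * f x + (1 - l) * f y <= f (l * x + (1 - l) * y).

Definition cond_M (iota : R) (w : R -> R) : Prop :=
  cont_on_nonneg w /\
  (forall t, 0 <= t -> 0 <= w t) /\
  nondecr_on w (fun t => 0 <= t) /\
  concave_on_nonneg w /\
  Ck_on 2 w (fun t => 0 < t) /\
  w 0 = 0 /\
  (* int_0^1 w(t)/t dt < oo  (nonnegative integrand: improper integral converges) *)
  ex_RInt_gen (fun t => w t / t) (at_right 0) (at_point 1) /\
  (exists l : R, is_lim (fun t => w t / t) p_infty l) /\
  (exists t0, 0 < t0 /\
     nonincr_on (fun t => w t / Rpower t iota) (fun t => 0 < t < t0) /\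
     (forall t, 0 < t < t0 ->
        t ^ 2 * Derive_n w 2 t >= - w t - 3 * t * Derive w t)).

Definition dini2s (s : R) (w : R -> R) : Prop :=
  (s <> 1/2 ->
     ex_RInt_gen
       (fun t => w t / t * ((Rpower (w t) (2*s - 1) - Rpower (w 1) (2*s - 1)) / (1 - 2*s)))
       (at_right 0) (at_point 1)) /\
  (s = 1/2 ->
     ex_RInt_gen (fun t => w t / t * ln (w 1 / w t)) (at_right 0) (at_point 1)).

Definition condZ0 (z : R -> R) : Prop :=
  (forall t, 0 < t -> 0 < z t) /\
  nondecr_on z (fun t => 0 <= t) /\
  concave_on_nonneg z /\
  z 0 = 0.

Definition condZ1 (z : R -> R) : Prop :=
  exists c1 t0, 0 < c1 /\ 0 < t0 < 1 /\
    forall t, 0 < t < t0 -> t ^ 2 * Derive_n z 3 t >= - c1 * Derive z t.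

Definition condZ2 (z : R -> R) : Prop :=
  nondecr_on (fun t => t * Derive z t) (fun t => 0 < t).

Definition condZ3 (z : R -> R) : Prop :=
  exists iota t0, 0 < iota /\ 0 < t0 /\
    nonincr_on (fun t => z t / Rpower t iota) (fun t => 0 < t <= t0).

Definition condZ4 (s : R) (z : R -> R) : Prop :=
  exists c2, 0 < c2 /\ forall t, 0 <= t -> z t <= c2 * Rpower (1 + t) (s / 2).

(* Main.v *)
Require Import Defs.
From Stdlib Require Import Reals Lra Lia Classical.
From Coquelicot Require Import Coquelicot.
Open Scope R_scope.

Lemma mvt_open (f df : R -> R) (a b : R) :
  a < b ->
  (forall c, a < c < b -> is_derive f c (df c)) ->
  (forall c, a <= c <= b -> continuity_pt f c) ->
  exists c, a < c < b /\ f b - f a = df c * (b - a).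
Proof.
  intros Hab Hd Hc.
  assert (pr1 : forall c, a < c < b -> derivable_pt f c).
  { intros c Hc'. exists (df c). apply is_derive_Reals. now apply Hd. }
  assert (pr2 : forall c, a < c < b -> derivable_pt id c).
  { intros c _. apply derivable_pt_id. }
  destruct (MVT f id a b pr1 pr2 Hab Hc) as [c [P HP]].
  { intros c _. apply derivable_continuous_pt, derivable_pt_id. }
  exists c; split; [exact P|].
  rewrite (derive_pt_eq_0 f c (df c) (pr1 c P)) in HP.
  2: apply is_derive_Reals; now apply Hd.
  rewrite (derive_pt_eq_0 id c 1 (pr2 c P)) in HP.
  2: apply derivable_pt_lim_id.
  unfold id in HP. lra.
Qed.

Lemma incr_of_deriv (f df : R -> R) (a b : R) :
  a <= b ->
  (forall c, a < c < b -> is_derive f c (df c)) ->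
  (forall c, a < c < b -> 0 <= df c) ->
  (forall c, a <= c <= b -> continuity_pt f c) ->
  f a <= f b.
Proof.
  intros Hab Hd Hp Hc. destruct (Req_dec a b) as [->|Hne]; [lra|].
  destruct (mvt_open f df a b) as [c [Hc1 Hc2]]; auto; try lra.
  specialize (Hp c Hc1). nra.
Qed.

Lemma concave_of_deriv (z d : R -> R) :
  (forall x, 0 <= x -> continuity_pt z x) ->
  (forall x, 0 < x -> is_derive z x (d x)) ->
  (forall x y, 0 < x -> x <= y -> d y <= d x) ->
  concave_on_nonneg z.
Proof.
  intros Hc Hd Hm.
  assert (key : forall x y l, 0 <= x -> x < y -> 0 < l < 1 ->
    l * z x + (1 - l) * z y <= z (l * x + (1 - l) * y)).
  { intros x y l Hx Hxy Hl. set (m := l * x + (1 - l) * y).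
    assert (Hxm : x < m) by (unfold m; nra).
    assert (Hmy : m < y) by (unfold m; nra).
    destruct (mvt_open z d x m) as [c1 [Hc1 E1]]; auto.
    { intros c Hc'. apply Hd. lra. }
    { intros c Hc'. apply Hc. lra. }
    destruct (mvt_open z d m y) as [c2 [Hc2 E2]]; auto.
    { intros c Hc'. apply Hd. lra. }
    { intros c Hc'. apply Hc. lra. }
    assert (d c2 <= d c1) by (apply Hm; lra).
    assert (Hmx : m - x = (1 - l) * (y - x)) by (unfold m; ring).
    assert (Hym : y - m = l * (y - x)) by (unfold m; ring).
    rewrite Hmx in E1. rewrite Hym in E2.
    assert (0 <= l * (1 - l) * (y - x) * (d c1 - d c2)).
    { apply Rmult_le_pos; [|lra]. apply Rmult_le_pos; [|lra]. nra. }
    nra. }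
  intros x y l Hx Hy Hl.
  destruct (Req_dec l 0) as [->|Hl0].
  { replace (0 * x + (1 - 0) * y) with y by ring. lra. }
  destruct (Req_dec l 1) as [->|Hl1].
  { replace (1 * x + (1 - 1) * y) with x by ring. lra. }
  destruct (Rtotal_order x y) as [Hxy|[<-|Hxy]].
  - apply key; lra.
  - replace (l * x + (1 - l) * x) with x by ring. lra.
  - pose proof (key y x (1 - l) Hy Hxy ltac:(lra)).
    replace (l * x + (1 - l) * y) with ((1 - l) * y + (1 - (1 - l)) * x) by ring.
    lra.
Qed.

Lemma deriv_le_of_left (f : R -> R) (x l M : R) :
  is_derive f x l ->
  (exists d, 0 < d /\ forall h, 0 < h < d -> (f x - f (x - h)) / h <= M) ->
  l <= M.
Proof.
  intros Hd [d [Hd0 Hq]]. apply is_derive_Reals in Hd.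
  destruct (Rle_or_lt l M) as [|Hlt]; [assumption|exfalso].
  assert (He : 0 < l - M) by lra.
  destruct (Hd (l - M) He) as [del Hdel].
  set (h := Rmin (del / 2) (d / 2)).
  assert (Hh : 0 < h) by (unfold h; apply Rmin_pos; destruct del; simpl; lra).
  assert (Hh1 : h <= del / 2) by apply Rmin_l.
  assert (Hh2 : h <= d / 2) by apply Rmin_r.
  assert (del > 0) by (destruct del; simpl; lra).
  specialize (Hdel (- h) ltac:(lra) ltac:(rewrite Rabs_Ropp, Rabs_right; lra)).
  specialize (Hq h ltac:(lra)).
  replace (x + - h) with (x - h) in Hdel by ring.
  replace ((f (x - h) - f x) / - h) with ((f x - f (x - h)) / h) in Hdel
    by (field; lra).
  apply Rabs_def2 in Hdel. lra.
Qed.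

Lemma deriv_ge_of_right (f : R -> R) (x l M : R) :
  is_derive f x l ->
  (exists d, 0 < d /\ forall h, 0 < h < d -> M <= (f (x + h) - f x) / h) ->
  M <= l.
Proof.
  intros Hd [d [Hd0 Hq]]. apply is_derive_Reals in Hd.
  destruct (Rle_or_lt M l) as [|Hlt]; [assumption|exfalso].
  assert (He : 0 < M - l) by lra.
  destruct (Hd (M - l) He) as [del Hdel].
  set (h := Rmin (del / 2) (d / 2)).
  assert (Hh : 0 < h) by (unfold h; apply Rmin_pos; destruct del; simpl; lra).
  assert (Hh1 : h <= del / 2) by apply Rmin_l.
  assert (Hh2 : h <= d / 2) by apply Rmin_r.
  assert (del > 0) by (destruct del; simpl; lra).
  specialize (Hdel h ltac:(lra) ltac:(rewrite Rabs_right; lra)).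
  specialize (Hq h ltac:(lra)).
  apply Rabs_def2 in Hdel. lra.
Qed.

Lemma dmul (f g : R -> R) x a b : is_derive f x a -> is_derive g x b ->
  is_derive (fun y => f y * g y) x (a * g x + f x * b).
Proof.
  intros Hf Hg. apply is_derive_Reals. apply is_derive_Reals in Hf, Hg.
  exact (derivable_pt_lim_mult f g x a b Hf Hg).
Qed.

Lemma dplus (f g : R -> R) x a b : is_derive f x a -> is_derive g x b ->
  is_derive (fun y => f y + g y) x (a + b).
Proof.
  intros Hf Hg. apply is_derive_Reals. apply is_derive_Reals in Hf, Hg.
  exact (derivable_pt_lim_plus f g x a b Hf Hg).
Qed.

Lemma dcomp (f g : R -> R) x a b : is_derive g x b -> is_derive f (g x) a ->
  is_derive (fun y => f (g y)) x (a * b).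
Proof.
  intros Hg Hf. apply is_derive_Reals. apply is_derive_Reals in Hf, Hg.
  exact (derivable_pt_lim_comp g f x b a Hg Hf).
Qed.

Lemma dext (f : R -> R) x a b : is_derive f x a -> a = b -> is_derive f x b.
Proof. intros H ->; exact H. Qed.

Lemma dfext (f g : R -> R) x a : (forall y, f y = g y) -> is_derive f x a -> is_derive g x a.
Proof. intros H Hf. apply (is_derive_ext f g); auto. Qed.

Lemma dcst (c : R) x : is_derive (fun _ => c) x 0.
Proof. auto_derive; auto. Qed.

Lemma cmul (f g : R -> R) x : continuous f x -> continuous g x -> continuous (fun y => f y * g y) x.
Proof. intros; apply (continuous_mult f g); auto. Qed.

Lemma cplus (f g : R -> R) x : continuous f x -> continuous g x -> continuous (fun y => f y + g y) x.
Proof. intros; apply (continuous_plus f g); auto. Qed.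

Lemma ccomp (f g : R -> R) x : continuous g x -> continuous f (g x) -> continuous (fun y => f (g y)) x.
Proof. intros; apply (continuous_comp g f); auto. Qed.

Lemma cder (f : R -> R) x a : is_derive f x a -> continuous f x.
Proof. intros H. apply (ex_derive_continuous (V := R_NormedModule)). eexists; eauto. Qed.

Lemma dinv1 t : t <> 0 -> is_derive (fun y => / y) t (- / t ^ 2).
Proof. intros; auto_derive; auto; field; auto. Qed.
Lemma dinv2 t : t <> 0 -> is_derive (fun y => / y ^ 2) t (- 2 / t ^ 3).
Proof. intros; auto_derive; [simpl; rewrite Rmult_1_r; now apply Rmult_integral_contrapositive|]; field; auto. Qed.
Lemma dinv3 t : t <> 0 -> is_derive (fun y => / y ^ 3) t (- 3 / t ^ 4).
Proof. intros; auto_derive; [simpl; rewrite Rmult_1_r; repeat apply Rmult_integral_contrapositive; auto|]; field; auto. Qed.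

Lemma locally_pos (t : R) : 0 < t -> locally t (fun y => 0 < y).
Proof.
  intros Ht. exists (mkposreal t Ht). intros y Hy.
  unfold ball in Hy; simpl in Hy; unfold AbsRing_ball, abs, minus, plus, opp in Hy; simpl in Hy.
  apply Rabs_def2 in Hy. lra.
Qed.

Definition wgood (w : R -> R) : Prop :=
  (forall x, 0 <= x -> 0 <= w x) /\ nondecr_on w (fun t => 0 <= t) /\
  concave_on_nonneg w /\ w 0 = 0 /\
  (forall x, 0 < x -> is_derive w x (Derive w x)) /\
  (forall x, 0 < x -> is_derive (Derive w) x (Derive_n w 2 x)) /\
  (forall x, 0 < x -> continuous (Derive_n w 2) x).

Lemma condM_wgood iota w : cond_M iota w -> wgood w.
Proof.
  intros (Hc & Hp & Hn & Hcc & [Hd Hd2] & H0 & _).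
  split; [exact Hp|]. split; [exact Hn|]. split; [exact Hcc|]. split; [exact H0|].
  split; [|split].
  - intros y Hy. apply Derive_correct. exact (Hd y Hy 1%nat ltac:(lia)).
  - intros y Hy. apply Derive_correct. exact (Hd y Hy 2%nat ltac:(lia)).
  - exact Hd2.
Qed.

Lemma wgood_cont w x : wgood w -> 0 < x -> continuity_pt w x.
Proof.
  intros (_&_&_&_&Hd&_) Hx. apply continuity_pt_filterlim.
  apply (ex_derive_continuous w x). eexists; apply Hd; exact Hx.
Qed.

Lemma wgood_cont' w x : wgood w -> 0 < x -> continuous w x.
Proof.
  intros Hw Hx. apply continuity_pt_filterlim. now apply wgood_cont.
Qed.

Lemma wgood_d1_nonneg w x : wgood w -> 0 < x -> 0 <= Derive w x.
Proof.
  intros Hw Hx. pose proof Hw as (Hp&Hn&Hcc&H0&Hd&_).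
  apply (deriv_ge_of_right w x); [now apply Hd|].
  exists 1; split; [lra|]. intros h Hh.
  assert (w x <= w (x + h)) by (apply Hn; lra).
  apply Rmult_le_reg_r with h; [lra|]. unfold Rdiv. rewrite Rmult_assoc, Rinv_l; lra.
Qed.

Lemma wgood_chord w x y : wgood w -> 0 < x -> x <= y -> w y / y <= w x / x.
Proof.
  intros Hw Hx Hxy. pose proof Hw as (Hp&Hn&Hcc&H0&Hd&_).
  pose proof (Hcc y 0 (x / y) ltac:(lra) ltac:(lra)) as H.
  assert (0 < y) by lra.
  assert (x / y <= 1).
  { apply Rmult_le_reg_r with y; [lra|]. unfold Rdiv; rewrite Rmult_assoc, Rinv_l; lra. }
  assert (0 <= x / y) by (apply Rlt_le, Rdiv_lt_0_compat; lra).
  specialize (H ltac:(lra)).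
  replace (x / y * y + (1 - x / y) * 0) with x in H by (field; lra).
  rewrite H0 in H.
  apply Rmult_le_reg_r with (x * y); [nra|].
  replace (w y / y * (x * y)) with (w y * x) by (field; lra).
  replace (w x / x * (x * y)) with (w x * y) by (field; lra).
  assert (x / y * w y <= w x) by lra.
  replace (w y * x) with (x / y * w y * y) by (field; lra). nra.
Qed.

Lemma wgood_xd1 w x : wgood w -> 0 < x -> x * Derive w x <= w x.
Proof.
  intros Hw Hx. pose proof Hw as (Hp&Hn&Hcc&H0&Hd&_).
  assert (Derive w x <= w x / x).
  { apply (deriv_le_of_left w x); [now apply Hd|].
    exists x; split; [lra|]. intros h Hh.
    pose proof (wgood_chord w (x - h) x Hw ltac:(lra) ltac:(lra)) as Hc.
    assert (0 <= w (x - h)) by (apply Hp; lra).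
    apply Rmult_le_reg_r with (h * x); [nra|].
    replace ((w x - w (x - h)) / h * (h * x)) with (x * w x - x * w (x - h)) by (field; lra).
    replace (w x / x * (h * x)) with (h * w x) by (field; lra).
    assert (w x * (x - h) <= w (x - h) * x).
    { apply Rmult_le_reg_r with (/ (x * (x - h))).
      - apply Rinv_0_lt_compat; nra.
      - replace (w x * (x - h) * / (x * (x - h))) with (w x / x) by (field; lra).
        replace (w (x - h) * x * / (x * (x - h))) with (w (x - h) / (x - h)) by (field; lra).
        lra. }
    nra. }
  apply Rmult_le_compat_l with (r := x) in H; [|lra].
  replace (x * (w x / x)) with (w x) in H by (field; lra). lra.
Qed.

Lemma wgood_scale w x K : wgood w -> 0 <= x -> 1 <= K -> w (K * x) <= K * w x.
Proof.
  intros Hw Hx HK. destruct (Req_dec x 0) as [->|Hx0].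
  - pose proof Hw as (_&_&_&H0&_). rewrite Rmult_0_r, H0. lra.
  - pose proof (wgood_chord w x (K * x) Hw ltac:(lra) ltac:(nra)).
    apply Rmult_le_reg_r with (/ (K * x)). apply Rinv_0_lt_compat; nra.
    replace (K * w x * / (K * x)) with (w x / x) by (field; lra). exact H.
Qed.

Lemma wgood_degen iota w : cond_M iota w ->
  (forall x, 0 <= x -> w x = 0) \/ (forall x, 0 < x -> 0 < w x).
Proof.
  intros HM. pose proof (condM_wgood _ _ HM) as Hw.
  pose proof Hw as (Hp&Hn&Hcc&H0&_).
  destruct HM as (_&_&_&_&_&_&_&_&[t0 [Ht0 [Hni _]]]).
  destruct (classic (exists v, 0 < v /\ w v = 0)) as [[v [Hv Hwv]]|Hno].
  - left.
    set (x1 := Rmin v (t0 / 2)).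
    assert (Hx1 : 0 < x1) by (apply Rmin_pos; lra).
    assert (Hx1v : x1 <= v) by apply Rmin_l.
    assert (Hx1t : x1 <= t0 / 2) by apply Rmin_r.
    assert (Hsmall : forall y, 0 <= y <= x1 -> w y = 0).
    { intros y Hy. assert (w y <= w v) by (apply Hn; lra). pose proof (Hp y ltac:(lra)). lra. }
    assert (Hmid : forall y, 0 < y < t0 -> w y = 0).
    { intros y Hy. destruct (Rle_or_lt y x1) as [Hle|Hlt]; [apply Hsmall; lra|].
      pose proof (Hni x1 y ltac:(simpl; lra) ltac:(simpl; lra) ltac:(lra)) as H.
      simpl in H. rewrite (Hsmall x1) in H by lra. unfold Rdiv in H. rewrite Rmult_0_l in H.
      assert (0 < Rpower y iota) by (unfold Rpower; apply exp_pos).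
      pose proof (Hp y ltac:(lra)).
      assert (w y * / Rpower y iota >= 0).
      { apply Rle_ge, Rmult_le_pos; [lra|]. apply Rlt_le, Rinv_0_lt_compat; lra. }
      assert (w y * / Rpower y iota = 0) by lra.
      apply Rmult_integral in H4. destruct H4 as [|H4]; [lra|].
      exfalso. apply (Rinv_neq_0_compat (Rpower y iota)); lra. }
    intros x Hx. destruct (Rle_or_lt x (t0 / 2)) as [Hle|Hlt].
    + destruct (Req_dec x 0) as [->|]; [exact H0|]. apply Hmid; lra.
    + pose proof (wgood_chord w (t0 / 2) x Hw ltac:(lra) ltac:(lra)) as H.
      rewrite (Hmid (t0 / 2)) in H by lra. unfold Rdiv in H at 2. rewrite Rmult_0_l in H.
      pose proof (Hp x ltac:(lra)).
      assert (w x / x >= 0) by (apply Rle_ge, Rdiv_le_0_compat; lra).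
      assert (w x / x = 0) by lra.
      unfold Rdiv in H3. apply Rmult_integral in H3. destruct H3 as [|H3]; [lra|].
      exfalso. apply (Rinv_neq_0_compat x); lra.
  - right. intros x Hx. pose proof (Hp x ltac:(lra)).
    destruct (Req_dec (w x) 0); [|lra]. exfalso. apply Hno. exists x; auto.
Qed.


Lemma ln1p_bound (s t : R) : 0 < s -> 0 <= t -> ln (1 + t) <= (2 / s) * Rpower (1 + t) (s / 2).
Proof.
  intros Hs Ht.
  assert (H1 : ln (Rpower (1 + t) (s / 2)) = s / 2 * ln (1 + t)) by apply ln_Rpower.
  assert (Hp : 0 < Rpower (1 + t) (s / 2)) by (unfold Rpower; apply exp_pos).
  assert (ln (Rpower (1 + t) (s / 2)) <= Rpower (1 + t) (s / 2)).
  { pose proof (exp_ineq1_le (ln (Rpower (1 + t) (s / 2)))). rewrite exp_ln in H; lra. }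
  rewrite H1 in H.
  apply Rmult_le_reg_l with (s / 2); [lra|].
  replace (s / 2 * (2 / s * Rpower (1 + t) (s / 2))) with (Rpower (1 + t) (s / 2)) by (field; lra).
  lra.
Qed.

Lemma one_le_rpow (s t : R) : 0 <= s -> 0 <= t -> 1 <= Rpower (1 + t) (s / 2).
Proof.
  intros Hs Ht. unfold Rpower.
  assert (0 <= s / 2 * ln (1 + t)).
  { apply Rmult_le_pos; [lra|]. rewrite <- ln_1. apply ln_le; lra. }
  pose proof (exp_ineq1_le (s / 2 * ln (1 + t))). lra.
Qed.


Definition partA (zw Q Q1 Q2 : R -> R) : Prop :=
  (forall t, t <= 0 -> zw t = 0) /\
  (forall e, 0 < e -> exists d, 0 < d /\ forall t, 0 < t < d -> Rabs (zw t) < e) /\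
  (forall t, 0 < t -> is_derive zw t (Q t / t)) /\
  (forall t, 0 < t -> is_derive Q t (Q1 t)) /\
  (forall t, 0 < t -> is_derive Q1 t (Q2 t)) /\
  (forall t, 0 < t -> continuous Q2 t) /\
  (forall t, 0 < t -> 0 <= Q t) /\
  (forall x y, 0 < x -> x <= y -> Q x <= Q y) /\
  (forall x y, 0 < x -> x <= y -> Q y / y <= Q x / x) /\
  (forall t, 0 < t -> t * Q1 t <= Q t) /\
  (exists c t1, 0 < c /\ 0 < t1 < 1 /\ forall t, 0 < t < t1 -> t ^ 2 * Q2 t >= - c * Q t) /\
  (exists B, forall t, 0 < t -> zw t <= B + B * ln (1 + t)).

Definition zfun (zw : R -> R) (t : R) : R := zw t + ln (1 + t).
Definition D1 (Q : R -> R) t := Q t / t + / (1 + t).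
Definition D2 (Q Q1 : R -> R) t := Q1 t / t - Q t / t ^ 2 - / (1 + t) ^ 2.
Definition D3 (Q Q1 Q2 : R -> R) t :=
  Q2 t / t - 2 * Q1 t / t ^ 2 + 2 * Q t / t ^ 3 + 2 / (1 + t) ^ 3.

Lemma partA_derivs zw Q Q1 Q2 : partA zw Q Q1 Q2 ->
  forall t, 0 < t ->
    is_derive (zfun zw) t (D1 Q t) /\
    is_derive (D1 Q) t (D2 Q Q1 t) /\
    is_derive (D2 Q Q1) t (D3 Q Q1 Q2 t) /\
    continuous (D3 Q Q1 Q2) t.
Proof.
  intros (H0&Hc&Hd&HQ1&HQ2&HQc&_) t Ht.
  assert (Ht0 : t <> 0) by lra.
  split; [|split; [|split]].
  - unfold zfun, D1. apply (dplus zw (fun t => ln (1 + t))).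
    + now apply Hd.
    + auto_derive; [lra|]. field. lra.
  - unfold D1, D2.
    eapply dext. apply (dplus (fun t => Q t / t) (fun t => / (1 + t))).
    + apply (dfext (fun y => Q y * / y)); [reflexivity|].
      apply dmul; [apply HQ1; lra| apply dinv1; lra].
    + auto_derive; [lra|reflexivity].
    + simpl. field. lra.
  - unfold D2, D3.
    eapply dext. apply (dplus (fun t => Q1 t / t - Q t / t ^ 2) (fun t => - / (1 + t) ^ 2)).
    + apply (dfext (fun y => Q1 y * / y + (-1) * (Q y * / y ^ 2))); [intros; unfold Rdiv; ring|].
      apply (dplus (fun y => Q1 y * / y) (fun y => (-1) * (Q y * / y ^ 2))).
      * apply dmul; [apply HQ2; lra| apply dinv1; lra].
      * apply (dmul (fun _ => -1)); [apply dcst|].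
        apply dmul; [apply HQ1; lra| apply dinv2; lra].
    + auto_derive; [rewrite Rmult_1_r; apply Rmult_integral_contrapositive; lra|reflexivity].
    + simpl. field. lra.
  - unfold D3.
    assert (cQ : continuous Q t) by (eapply cder; apply HQ1; lra).
    assert (cQ1 : continuous Q1 t) by (eapply cder; apply HQ2; lra).
    assert (cQ2 : continuous Q2 t) by (apply HQc; lra).
    assert (cI : forall n, continuous (fun y => / y ^ n) t).
    { intros n. apply (ex_derive_continuous (V := R_NormedModule)). auto_derive. apply pow_nonzero; lra. }
    assert (cJ : continuous (fun y => 2 / (1 + y) ^ 3) t).
    { apply (ex_derive_continuous (V := R_NormedModule)). auto_derive. repeat (apply Rmult_integral_contrapositive; split); lra. }
    apply (continuous_ext (fun y => Q2 y * / y ^ 1 + (-2) * (Q1 y * / y ^ 2) + 2 * (Q y * / y ^ 3) + 2 / (1 + y) ^ 3)).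
    { intros y. unfold Rdiv. rewrite pow_1. simpl. ring. }
    apply cplus; [|exact cJ]. apply cplus; [apply cplus|].
    + apply cmul; auto.
    + apply (cmul (fun _ => -2)); [apply continuous_const|]. apply cmul; auto.
    + apply (cmul (fun _ => 2)); [apply continuous_const|]. apply cmul; auto.
Qed.

Lemma pd1 zw Q Q1 Q2 t : partA zw Q Q1 Q2 -> 0 < t -> is_derive (zfun zw) t (D1 Q t).
Proof. intros HA Ht. destruct (partA_derivs _ _ _ _ HA t Ht) as (a&b&c&d). exact a. Qed.
Lemma pd2 zw Q Q1 Q2 t : partA zw Q Q1 Q2 -> 0 < t -> is_derive (D1 Q) t (D2 Q Q1 t).
Proof. intros HA Ht. destruct (partA_derivs _ _ _ _ HA t Ht) as (a&b&c&d). exact b. Qed.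
Lemma pd3 zw Q Q1 Q2 t : partA zw Q Q1 Q2 -> 0 < t -> is_derive (D2 Q Q1) t (D3 Q Q1 Q2 t).
Proof. intros HA Ht. destruct (partA_derivs _ _ _ _ HA t Ht) as (a&b&c&d). exact c. Qed.
Lemma pd4 zw Q Q1 Q2 t : partA zw Q Q1 Q2 -> 0 < t -> continuous (D3 Q Q1 Q2) t.
Proof. intros HA Ht. destruct (partA_derivs _ _ _ _ HA t Ht) as (a&b&c&d). exact d. Qed.

Lemma partA_D zw Q Q1 Q2 : partA zw Q Q1 Q2 -> forall t, 0 < t ->
  Derive (zfun zw) t = D1 Q t /\ Derive_n (zfun zw) 2 t = D2 Q Q1 t /\
  Derive_n (zfun zw) 3 t = D3 Q Q1 Q2 t.
Proof.
  intros HA t Ht.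
  assert (E1 : forall y, 0 < y -> Derive (zfun zw) y = D1 Q y).
  { intros y Hy. apply is_derive_unique. now apply (pd1 zw Q Q1 Q2). }
  assert (E2 : forall y, 0 < y -> Derive_n (zfun zw) 2 y = D2 Q Q1 y).
  { intros y Hy. simpl. rewrite (Derive_ext_loc _ (D1 Q)).
    - apply is_derive_unique. now apply (pd2 zw Q Q1 Q2).
    - generalize (locally_pos y Hy). apply filter_imp. intros u Hu. now apply E1. }
  split; [now apply E1|]. split; [now apply E2|].
  change (Derive (Derive_n (zfun zw) 2) t = D3 Q Q1 Q2 t).
  rewrite (Derive_ext_loc _ (D2 Q Q1)).
  - apply is_derive_unique. now apply (pd3 zw Q Q1 Q2).
  - generalize (locally_pos t Ht). apply filter_imp. intros u Hu. now apply E2.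
Qed.

Lemma pD1 zw Q Q1 Q2 t : partA zw Q Q1 Q2 -> 0 < t -> Derive (zfun zw) t = D1 Q t.
Proof. intros HA Ht. destruct (partA_D _ _ _ _ HA t Ht) as (a&b&c). exact a. Qed.
Lemma pD2 zw Q Q1 Q2 t : partA zw Q Q1 Q2 -> 0 < t -> Derive_n (zfun zw) 2 t = D2 Q Q1 t.
Proof. intros HA Ht. destruct (partA_D _ _ _ _ HA t Ht) as (a&b&c). exact b. Qed.
Lemma pD3 zw Q Q1 Q2 t : partA zw Q Q1 Q2 -> 0 < t -> Derive_n (zfun zw) 3 t = D3 Q Q1 Q2 t.
Proof. intros HA Ht. destruct (partA_D _ _ _ _ HA t Ht) as (a&b&c). exact c. Qed.

Lemma partA_Ck zw Q Q1 Q2 (I : R -> Prop) : partA zw Q Q1 Q2 ->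
  (forall x, I x -> 0 < x) -> Ck_on 3 (zfun zw) I /\ Ck_on 2 (zfun zw) I.
Proof.
  intros HA HI.
  assert (X1 : forall x, 0 < x -> ex_derive (zfun zw) x).
  { intros x Hx. eexists. now apply (pd1 zw Q Q1 Q2). }
  assert (X2 : forall x, 0 < x -> ex_derive (Derive (zfun zw)) x).
  { intros x Hx. apply (ex_derive_ext_loc (D1 Q)).
    - generalize (locally_pos x Hx). apply filter_imp. intros u Hu.
      symmetry. now apply (pD1 zw Q Q1 Q2).
    - eexists. now apply (pd2 zw Q Q1 Q2). }
  assert (X3 : forall x, 0 < x -> ex_derive (Derive_n (zfun zw) 2) x).
  { intros x Hx. apply (ex_derive_ext_loc (D2 Q Q1)).
    - generalize (locally_pos x Hx). apply filter_imp. intros u Hu.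
      symmetry. now apply (pD2 zw Q Q1 Q2).
    - eexists. now apply (pd3 zw Q Q1 Q2). }
  assert (Xn : forall x, 0 < x -> forall m, (m <= 3)%nat -> ex_derive_n (zfun zw) m x).
  { intros x Hx m Hm. destruct m as [|[|[|[|m]]]]; try lia.
    - exact Logic.I.
    - now apply X1.
    - now apply X2.
    - now apply X3. }
  split; split.
  - intros x Hx m Hm. apply Xn; auto.
  - intros x Hx. apply HI in Hx.
    apply (continuous_ext_loc _ (D3 Q Q1 Q2)).
    + generalize (locally_pos x Hx). apply filter_imp. intros u Hu.
      symmetry. now apply (pD3 zw Q Q1 Q2).
    + now apply (pd4 zw Q Q1 Q2).
  - intros x Hx m Hm. apply Xn; [now apply HI|]. lia.
  - intros x Hx. apply HI in Hx.
    apply (continuous_ext_loc _ (D2 Q Q1)).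
    + generalize (locally_pos x Hx). apply filter_imp. intros u Hu.
      symmetry. now apply (pD2 zw Q Q1 Q2).
    + eapply cder. now apply (pd3 zw Q Q1 Q2).
Qed.


Lemma partA_cont zw Q Q1 Q2 : partA zw Q Q1 Q2 ->
  forall x, 0 <= x -> continuity_pt (zfun zw) x.
Proof.
  intros HA x Hx. destruct (Rle_lt_or_eq_dec 0 x Hx) as [Hp|<-].
  - apply continuity_pt_filterlim. eapply cder. now apply (pd1 zw Q Q1 Q2).
  - unfold zfun. apply continuity_pt_plus.
    + destruct HA as (H0&Hc&_).
      intros e He. destruct (Hc e He) as [d [Hd Hdd]].
      exists d; split; [lra|]. intros y [_ Hy].
      unfold dist in *; simpl in *; unfold R_dist in *.
      rewrite (H0 0) by lra. rewrite Rminus_0_r in *.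
      destruct (Rle_or_lt y 0) as [Hy0|Hy0].
      * rewrite H0 by lra. rewrite Rabs_R0; lra.
      * apply Hdd. split; auto. rewrite Rabs_right in Hy; lra.
    + apply continuity_pt_filterlim.
      apply (ex_derive_continuous (V := R_NormedModule) (fun t => ln (1 + t))).
      auto_derive. lra.
Qed.

Lemma partA_main zw Q Q1 Q2 s : partA zw Q Q1 Q2 -> 0 < s < 1 ->
  (forall t, 0 <= t -> 0 <= zfun zw t) /\
  cont_on_nonneg (zfun zw) /\
  Ck_on 2 (zfun zw) (fun t => 0 < t) /\
  Ck_on 3 (zfun zw) (fun t => 0 < t < 2) /\
  condZ0 (zfun zw) /\ condZ1 (zfun zw) /\ condZ2 (zfun zw) /\
  condZ3 (zfun zw) /\ condZ4 s (zfun zw) /\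
  (forall t, 0 < t -> t * Derive (zfun zw) t = Q t + t / (1 + t)).
Proof.
  intros HA Hs.
  pose proof HA as (H0&Hc&Hd&HQ1&HQ2&HQc&HQp&HQm&HQd&HQ1b&[c [t1 [Hc0 [Ht1 HZ1]]]]&[B HB]).
  set (z := zfun zw).
  assert (Hcont : forall x, 0 <= x -> continuity_pt z x) by (apply (partA_cont _ _ _ _ HA)).
  assert (Hder : forall x, 0 < x -> is_derive z x (D1 Q x)).
  { intros x Hx. now apply (pd1 zw Q Q1 Q2). }
  assert (HD1p : forall x, 0 < x -> 0 <= D1 Q x).
  { intros x Hx. unfold D1. pose proof (HQp x Hx).
    assert (0 <= Q x / x) by (apply Rdiv_le_0_compat; lra).
    assert (0 < / (1 + x)) by (apply Rinv_0_lt_compat; lra). lra. }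
  assert (HD1m : forall x y, 0 < x -> x <= y -> D1 Q y <= D1 Q x).
  { intros x y Hx Hxy. unfold D1. pose proof (HQd x y Hx Hxy).
    assert (/ (1 + y) <= / (1 + x)) by (apply Rinv_le_contravar; lra). lra. }
  assert (Hz0 : z 0 = 0).
  { unfold z, zfun. rewrite H0 by lra. rewrite Rplus_0_l, Rplus_0_r. apply ln_1. }
  assert (Hmono : forall x y, 0 <= x -> x <= y -> z x <= z y).
  { intros x y Hx Hxy. apply (incr_of_deriv z (D1 Q)); auto.
    - intros u Hu. apply Hder. lra.
    - intros u Hu. apply HD1p. lra.
    - intros u Hu. apply Hcont. lra. }
  assert (Hconc : concave_on_nonneg z).
  { apply (concave_of_deriv z (D1 Q)); auto. }
  assert (Hzwp : forall t, 0 <= t -> 0 <= zw t).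
  { intros t Ht. rewrite <- (H0 0) by lra.
    apply (incr_of_deriv zw (fun x => Q x / x)); auto.
    - intros u Hu. apply Hd. lra.
    - intros u Hu. apply Rdiv_le_0_compat; [apply HQp|]; lra.
    - intros u Hu. destruct (Rle_lt_or_eq_dec 0 u ltac:(lra)) as [Hu0|<-].
      + apply continuity_pt_filterlim. eapply cder. apply Hd. lra.
      + intros e He. destruct (Hc e He) as [d [Hd0 Hdd]].
        exists d; split; [lra|]. intros y [_ Hy].
        unfold dist in *; simpl in *; unfold R_dist in *.
        rewrite (H0 0) by lra. rewrite Rminus_0_r in *.
        destruct (Rle_or_lt y 0) as [Hy0|Hy0].
        * rewrite H0 by lra. rewrite Rabs_R0; lra.
        * apply Hdd. split; auto. rewrite Rabs_right in Hy; lra. }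
  assert (HDz : forall t, 0 < t -> Derive z t = D1 Q t) by (intros; now apply (pD1 zw Q Q1 Q2)).
  assert (Hln : forall t, 0 < t -> 0 < ln (1 + t)).
  { intros t Ht. rewrite <- ln_1. apply ln_increasing; lra. }
  split; [|split; [|split; [|split; [|split; [|split; [|split; [|split; [|split]]]]]]]].
  - intros t Ht. rewrite <- Hz0. apply Hmono; lra.
  - intros t Ht. apply (filterlim_filter_le_1 (F := locally t)).
    + apply filter_le_within.
    + apply continuity_pt_filterlim. now apply Hcont.
  - apply (partA_Ck _ _ _ _ (fun t => 0 < t) HA). auto.
  - apply (partA_Ck _ _ _ _ (fun t => 0 < t < 2) HA). intros x Hx; lra.
  - split; [|split; [|split]]; auto.
    + intros t Ht. unfold z, zfun. pose proof (Hzwp t ltac:(lra)). pose proof (Hln t Ht). lra.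
    + intros x y Hx Hy Hxy. now apply Hmono.
  - exists c, t1. split; [auto|]. split; [auto|]. intros t Ht.
    rewrite (pD1 zw Q Q1 Q2) by (auto; lra). rewrite (pD3 zw Q Q1 Q2) by (auto; lra).
    unfold D1, D3.
    specialize (HZ1 t Ht). pose proof (HQ1b t ltac:(lra)). pose proof (HQp t ltac:(lra)).
    assert (Htp : 0 < t) by lra.
    assert (E : t ^ 2 * (Q2 t / t - 2 * Q1 t / t ^ 2 + 2 * Q t / t ^ 3 + 2 / (1 + t) ^ 3)
      = (t ^ 2 * Q2 t) / t + 2 * (Q t - t * Q1 t) / t + 2 * t ^ 2 / (1 + t) ^ 3).
    { field. lra. }
    rewrite E.
    assert (0 <= 2 * (Q t - t * Q1 t) / t) by (apply Rdiv_le_0_compat; lra).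
    assert (0 <= 2 * t ^ 2 / (1 + t) ^ 3).
    { apply Rdiv_le_0_compat; [nra|]. apply pow_lt; lra. }
    assert (t ^ 2 * Q2 t / t >= - c * Q t / t).
    { unfold Rdiv. apply Rle_ge, Rmult_le_compat_r; [left; apply Rinv_0_lt_compat; lra| lra]. }
    assert (0 < / (1 + t)) by (apply Rinv_0_lt_compat; lra).
    assert (- c * (Q t / t + / (1 + t)) <= - c * Q t / t).
    { assert (0 <= c * / (1 + t)) by (apply Rmult_le_pos; lra).
      replace (- c * (Q t / t + / (1 + t))) with (- c * Q t / t - c * / (1 + t)) by (field; lra).
      lra. }
    lra.
  - intros x y Hx Hy Hxy. simpl in Hx, Hy.
    rewrite !HDz by lra. unfold D1.
    replace (x * (Q x / x + / (1 + x))) with (Q x + x / (1 + x)) by (field; lra).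
    replace (y * (Q y / y + / (1 + y))) with (Q y + y / (1 + y)) by (field; lra).
    pose proof (HQm x y Hx Hxy).
    assert (x / (1 + x) <= y / (1 + y)).
    { apply Rmult_le_reg_r with ((1 + x) * (1 + y)); [nra|].
      replace (x / (1 + x) * ((1 + x) * (1 + y))) with (x * (1 + y)) by (field; lra).
      replace (y / (1 + y) * ((1 + x) * (1 + y))) with (y * (1 + x)) by (field; lra). nra. }
    lra.
  - exists 1, 1. split; [lra|]. split; [lra|].
    intros x y Hx Hy Hxy. simpl in Hx, Hy.
    rewrite !Rpower_1 by lra.
    pose proof (Hconc y 0 (x / y) ltac:(lra) ltac:(lra)) as H.
    assert (x / y <= 1).
    { apply Rmult_le_reg_r with y; [lra|]. unfold Rdiv; rewrite Rmult_assoc, Rinv_l; lra. }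
    assert (0 <= x / y) by (apply Rlt_le, Rdiv_lt_0_compat; lra).
    specialize (H ltac:(lra)).
    replace (x / y * y + (1 - x / y) * 0) with x in H by (field; lra).
    rewrite Hz0 in H.
    apply Rmult_le_reg_r with (x * y); [nra|].
    replace (z y / y * (x * y)) with (x / y * z y * y) by (field; lra).
    replace (z x / x * (x * y)) with (z x * y) by (field; lra).
    apply Rmult_le_compat_r; lra.
  - exists (Rabs B + (Rabs B + 1) * (2 / s) + 1). split.
    { assert (0 <= (Rabs B + 1) * (2 / s)) by (apply Rmult_le_pos; [pose proof (Rabs_pos B); lra| apply Rlt_le, Rdiv_lt_0_compat; lra]).
      pose proof (Rabs_pos B). lra. }
    intros t Ht. unfold z, zfun.
    assert (Hw : zw t <= Rabs B + Rabs B * ln (1 + t)).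
    { destruct (Rle_lt_or_eq_dec 0 t Ht) as [Htp|<-].
      - specialize (HB t Htp).
        assert (0 <= ln (1 + t)) by (pose proof (Hln t Htp); lra).
        pose proof (Rle_abs B).
        assert (B * ln (1 + t) <= Rabs B * ln (1 + t)) by (apply Rmult_le_compat_r; lra). lra.
      - rewrite H0 by lra. rewrite Rplus_0_r, ln_1. pose proof (Rabs_pos B). lra. }
    pose proof (ln1p_bound s t ltac:(lra) Ht).
    pose proof (one_le_rpow s t ltac:(lra) Ht).
    assert (0 <= ln (1 + t)) by (rewrite <- ln_1; apply ln_le; lra).
    set (R := Rpower (1 + t) (s / 2)) in *.
    assert (Rabs B * ln (1 + t) <= Rabs B * (2 / s * R)) by (apply Rmult_le_compat_l; [apply Rabs_pos|lra]).
    assert (Rabs B <= Rabs B * R) by (pose proof (Rabs_pos B); pose proof (Rmult_le_compat_l (Rabs B) 1 R); lra).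
    assert (0 <= 2 / s) by (apply Rlt_le, Rdiv_lt_0_compat; lra).
    assert (2 / s <= 2 / s * R) by (pose proof (Rmult_le_compat_l (2/s) 1 R); lra).
    assert ((Rabs B + 1) * ln (1 + t) <= (Rabs B + 1) * (2 / s * R)).
    { apply Rmult_le_compat_l; [pose proof (Rabs_pos B)|]; lra. }
    assert (R * (Rabs B + (Rabs B + 1) * (2 / s) + 1) = Rabs B * R + (Rabs B + 1) * (2 / s * R) + R) by ring.
    rewrite Rmult_comm. lra.
  - intros t Ht. rewrite HDz by lra. unfold D1. field. lra.
Qed.

Lemma gen_bound (D : R -> R) :
  (forall v, 0 < v <= 1 -> 0 <= D v) ->
  ex_RInt_gen D (at_right 0) (at_point 1) ->
  exists M, forall e, 0 < e < 1 -> ex_RInt D e 1 /\ RInt D e 1 <= M.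
Proof.
  intros Hp [l Hl].
  specialize (Hl (ball l (mkposreal 1 Rlt_0_1)) (locally_ball l _)).
  destruct Hl as [P R HP HR Himp].
  destruct HP as [d Hd]. unfold at_point in HR.
  assert (Ha : forall a, 0 < a < d -> exists y, is_RInt D a 1 y /\ y < l + 1).
  { intros a Ha. destruct (Himp a 1) as [y [Hy1 Hy2]]; auto.
    - apply Hd; [|lra]. unfold ball; simpl; unfold AbsRing_ball, abs, minus, plus, opp; simpl.
      rewrite Ropp_0, Rplus_0_r, Rabs_right; destruct d; simpl in *; lra.
    - exists y. split; auto. unfold ball in Hy2; simpl in Hy2;
      unfold AbsRing_ball, abs, minus, plus, opp in Hy2; simpl in Hy2.
      apply Rabs_def2 in Hy2. lra. }
  exists (l + 1). intros e He.
  set (a := Rmin e (d / 2)).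
  assert (Hd0 : 0 < d) by (destruct d; simpl; lra).
  assert (Ha0 : 0 < a) by (unfold a; apply Rmin_pos; lra).
  assert (Hae : a <= e) by apply Rmin_l.
  assert (Had : a <= d / 2) by apply Rmin_r.
  destruct (Ha a ltac:(lra)) as [y [Hy1 Hy2]].
  assert (Ex : ex_RInt D a 1) by (exists y; exact Hy1).
  assert (Ex2 : ex_RInt D e 1) by (apply (ex_RInt_Chasles_2 D a e 1); [lra|exact Ex]).
  split; [exact Ex2|].
  assert (Ex1 : ex_RInt D a e) by (apply (ex_RInt_Chasles_1 D a e 1); [lra|exact Ex]).
  pose proof (RInt_Chasles D a e 1 Ex1 Ex2) as HC.
  rewrite (is_RInt_unique D a 1 y Hy1) in HC.
  assert (0 <= RInt D a e) by (apply RInt_ge_0; auto; intros; apply Hp; lra).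
  unfold plus in HC; simpl in HC. lra.
Qed.

Definition Eset (g : R -> R) (r : R) : Prop := exists e, 0 < e < 1 /\ r = RInt g e 1.
Definition J0 (g : R -> R) : R := real (Lub_Rbar (Eset g)).
Definition Jf (g : R -> R) (x : R) : R := J0 g + RInt g 1 x.

Definition gok (g : R -> R) : Prop :=
  (forall v, 0 < v -> continuous g v) /\ (forall v, 0 < v -> 0 <= g v) /\
  (exists M, forall e, 0 < e < 1 -> RInt g e 1 <= M).

Lemma gok_ex g a b : gok g -> 0 < a -> 0 < b -> ex_RInt g a b.
Proof.
  intros [Hc _] Ha Hb. apply (ex_RInt_continuous (V := R_CompleteNormedModule)). intros z Hz. apply Hc.
  assert (0 < Rmin a b) by (apply Rmin_pos; lra). lra.
Qed.

Lemma J0_prop g : gok g ->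
  (forall e, 0 < e < 1 -> RInt g e 1 <= J0 g) /\
  (forall d, 0 < d -> exists e, 0 < e < 1 /\ J0 g - d < RInt g e 1).
Proof.
  intros Hg. pose proof Hg as (_ & _ & [M HM]).
  destruct (Lub_Rbar_correct (Eset g)) as [Hub Hlub].
  assert (Hfin : Lub_Rbar (Eset g) = Finite (J0 g)).
  { unfold J0. destruct (Lub_Rbar (Eset g)) eqn:E; simpl; auto.
    - exfalso. specialize (Hlub (Finite M)).
      assert (is_ub_Rbar (Eset g) M).
      { intros x [e [He ->]]. simpl. now apply HM. }
      specialize (Hlub H). try rewrite E in Hlub. simpl in Hlub. exact Hlub.
    - exfalso. specialize (Hub (RInt g (1/2) 1) ltac:(exists (1/2); split; [lra|reflexivity])).
      try rewrite E in Hub. simpl in Hub. exact Hub. }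
  split.
  - intros e He. specialize (Hub (RInt g e 1) ltac:(exists e; split; auto)).
    rewrite Hfin in Hub. simpl in Hub. exact Hub.
  - intros d Hd. apply NNPP. intros Hno.
    assert (is_ub_Rbar (Eset g) (J0 g - d)).
    { intros x [e [He ->]]. simpl. apply Rnot_lt_le. intros Hlt. apply Hno. exists e. split; auto. }
    specialize (Hlub _ H). rewrite Hfin in Hlub. simpl in Hlub. lra.
Qed.

Lemma Jf_nonneg g x : gok g -> 0 < x -> 0 <= Jf g x.
Proof.
  intros Hg Hx. destruct (J0_prop g Hg) as [Hle _]. pose proof Hg as (_&Hp&_). unfold Jf.
  destruct (Rlt_or_le x 1) as [H1|H1].
  - rewrite <- (opp_RInt_swap g x 1) by (apply gok_ex; auto; lra).
    specialize (Hle x ltac:(lra)). unfold opp; simpl. lra.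
  - specialize (Hle (1/2) ltac:(lra)).
    assert (0 <= RInt g (1/2) 1) by (apply RInt_ge_0; [lra|apply gok_ex; auto; lra|intros; apply Hp; lra]).
    assert (0 <= RInt g 1 x) by (apply RInt_ge_0; [lra|apply gok_ex; auto; lra|intros; apply Hp; lra]).
    lra.
Qed.

Lemma Jf_small g : gok g -> forall e, 0 < e -> exists d, 0 < d /\ forall x, 0 < x < d -> Jf g x < e.
Proof.
  intros Hg e He. destruct (J0_prop g Hg) as [_ Hd]. pose proof Hg as (_&Hp&_).
  destruct (Hd e He) as [a [Ha Hlt]]. exists a. split; [lra|]. intros x Hx.
  unfold Jf. rewrite <- (opp_RInt_swap g x 1) by (apply gok_ex; auto; lra).
  assert (Exa : ex_RInt g x a) by (apply gok_ex; auto; lra).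
  assert (Exb : ex_RInt g a 1) by (apply gok_ex; auto; lra).
  rewrite <- (RInt_Chasles g x a 1 Exa Exb).
  assert (0 <= RInt g x a) by (apply RInt_ge_0; [lra|auto|intros; apply Hp; lra]).
  unfold opp, plus; simpl. lra.
Qed.

Lemma Jf_deriv g x : gok g -> 0 < x -> is_derive (Jf g) x (g x).
Proof.
  intros Hg Hx. unfold Jf.
  eapply dext. apply (dplus (fun _ => J0 g) (fun y => RInt g 1 y)).
  - apply dcst.
  - apply (is_derive_RInt g (fun y => RInt g 1 y) 1 x).
    + generalize (locally_pos x Hx). apply filter_imp. intros u Hu.
      apply (RInt_correct (V := R_CompleteNormedModule)). apply gok_ex; auto; lra.
    + destruct Hg as [Hc _]. now apply Hc.
  - simpl. ring.
Qed.

Lemma Jf_bound g x : gok g -> (forall v, 0 < v -> g v <= / v) -> 0 < x -> Jf g x <= J0 g + ln (1 + x).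
Proof.
  intros Hg Hb Hx. unfold Jf. pose proof Hg as (_&Hp&_).
  assert (0 <= ln (1 + x)) by (rewrite <- ln_1; apply ln_le; lra).
  destruct (Rlt_or_le x 1) as [H1|H1].
  - rewrite <- (opp_RInt_swap g x 1) by (apply gok_ex; auto; lra).
    assert (0 <= RInt g x 1) by (apply RInt_ge_0; [lra|apply gok_ex; auto; lra|intros; apply Hp; lra]).
    unfold opp; simpl. lra.
  - assert (RInt g 1 x <= RInt (fun v => / v) 1 x).
    { apply RInt_le; auto.
      - apply gok_ex; auto; lra.
      - apply (ex_RInt_continuous (V := R_CompleteNormedModule)). intros z Hz.
        apply (ex_derive_continuous (V := R_NormedModule)). auto_derive.
        assert (0 < Rmin 1 x) by (apply Rmin_pos; lra). lra.
      - intros v Hv. apply Hb. lra. }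
    assert (RInt (fun v => / v) 1 x = ln x).
    { assert (Hi : is_RInt (fun v => / v) 1 x (minus (ln x) (ln 1))).
      { apply (is_RInt_derive ln (fun v => / v)).
        - intros z Hz. assert (0 < Rmin 1 x) by (apply Rmin_pos; lra). apply is_derive_ln. lra.
        - intros z Hz. assert (0 < Rmin 1 x) by (apply Rmin_pos; lra).
          apply (ex_derive_continuous (V := R_NormedModule)). auto_derive. lra. }
      rewrite (is_RInt_unique _ _ _ _ Hi). rewrite ln_1. unfold minus, plus, opp; simpl. ring. }
    assert (ln x <= ln (1 + x)) by (apply ln_le; lra). lra.
Qed.

Definition Lgood (L L1 L2 : R -> R) (cL : R) : Prop :=
  0 < cL /\
  (forall x, 0 < x -> is_derive L x (L1 x)) /\
  (forall x, 0 < x -> is_derive L1 x (L2 x)) /\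
  (forall x, 0 < x -> continuous L2 x) /\
  (forall x, 0 < x -> 0 <= L x <= 1) /\
  (forall x, 0 < x -> 0 <= L1 x) /\
  (forall x, 0 < x -> x * L1 x <= L x) /\
  (forall x, 0 < x -> - cL * L x <= x ^ 2 * L2 x).

Definition Lspec (s0 : R) (L : R -> R) (cg : R) : Prop :=
  0 < cg /\ forall x, 0 < x <= 1 ->
    x <= cg * L x /\
    (forall s, s0 <= s < 1 -> s <> 1/2 -> (Rpower x (2*s) - x) / (1 - 2*s) <= cg * L x) /\
    (s0 <= 1/2 -> x * ln (1 / x) <= cg * L x).

Lemma Lmono L L1 L2 cL x y : Lgood L L1 L2 cL -> 0 < x -> x <= y -> L x <= L y.
Proof.
  intros (_&Hd&_&_&_&Hp&_) Hx Hxy.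
  apply (incr_of_deriv L L1); auto.
  - intros c Hc. apply Hd; lra.
  - intros c Hc. apply Hp; lra.
  - intros c Hc. apply continuity_pt_filterlim. eapply cder. apply Hd. lra.
Qed.

Lemma Lratio L L1 L2 cL x y : Lgood L L1 L2 cL -> 0 < x -> x <= y -> L y / y <= L x / x.
Proof.
  intros (_&Hd&_&_&_&Hp&Hx1&_) Hx Hxy.
  assert (Hder : forall c, 0 < c -> is_derive (fun t => - (L t / t)) c ((L c - c * L1 c) / c ^ 2)).
  { intros c Hc. apply (dfext (fun t => -1 * (L t * / t))); [intros; unfold Rdiv; ring|]. eapply dext.
    + apply (dmul (fun _ => -1) (fun t => L t * / t)); [apply dcst|].
      apply dmul; [apply Hd; lra| apply dinv1; lra].
    + simpl. field. lra. }
  assert (H : - (L x / x) <= - (L y / y)).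
  { apply (incr_of_deriv (fun t => - (L t / t)) (fun t => (L t - t * L1 t) / t ^ 2)); auto.
    - intros c Hc. apply Hder. lra.
    - intros c Hc. apply Rdiv_le_0_compat; [specialize (Hx1 c ltac:(lra)); lra|]. apply pow_lt; lra.
    - intros c Hc. apply continuity_pt_filterlim. apply (cder (fun t => - (L t / t)) c _ (Hder c ltac:(lra))). }
  lra.
Qed.

Lemma Lcont L L1 L2 cL x : Lgood L L1 L2 cL -> 0 < x -> continuous L x.
Proof. intros (_&Hd&_) Hx. eapply cder. apply Hd. exact Hx. Qed.

Lemma rpow_split x b : 0 < x -> Rpower x b = x * exp ((b - 1) * ln x).
Proof.
  intros Hx. unfold Rpower. replace (b * ln x) with (ln x + (b - 1) * ln x) by ring.
  rewrite exp_plus, exp_ln by lra. reflexivity.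
Qed.

Lemma ln_inv_nonneg x : 0 < x <= 1 -> 0 <= ln (1 / x) /\ ln (1 / x) = - ln x.
Proof.
  intros Hx. unfold Rdiv. rewrite Rmult_1_l, ln_Rinv by lra.
  split; [|reflexivity]. assert (ln x <= ln 1) by (apply ln_le; lra). rewrite ln_1 in H. lra.
Qed.

Lemma gs_gt x s : 0 < x <= 1 -> 1/2 < s ->
  (Rpower x (2*s) - x) / (1 - 2*s) <= x * ln (1 / x) /\
  (Rpower x (2*s) - x) / (1 - 2*s) <= x / (2*s - 1).
Proof.
  intros Hx Hs. destruct (ln_inv_nonneg x Hx) as [Hl El]. rewrite El in *.
  rewrite rpow_split by lra. set (c := 2 * s - 1).
  replace (2 * s - 1) with c by reflexivity.
  assert (Hc : 0 < c) by (unfold c; lra).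
  pose proof (exp_ineq1_le (c * ln x)). pose proof (exp_pos (c * ln x)).
  replace ((x * exp (c * ln x) - x) / (1 - 2 * s)) with (x * (1 - exp (c * ln x)) / c) by (unfold c; field; lra).
  split.
  - apply Rmult_le_reg_r with c; [lra|].
    replace (x * (1 - exp (c * ln x)) / c * c) with (x * (1 - exp (c * ln x))) by (field; lra).
    assert (1 - exp (c * ln x) <= - (c * ln x)) by lra.
    replace (x * - ln x * c) with (x * - (c * ln x)) by ring.
    apply Rmult_le_compat_l; lra.
  - unfold Rdiv. apply Rmult_le_compat_r; [left; apply Rinv_0_lt_compat; lra|].
    assert (0 <= x * exp (c * ln x)) by (apply Rmult_le_pos; lra). nra.
Qed.

Lemma xlog_pow x a : 0 < x <= 1 -> 0 < a < 1 -> x * ln (1 / x) <= / (1 - a) * Rpower x a.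
Proof.
  intros Hx Ha. destruct (ln_inv_nonneg x Hx) as [Hl El]. rewrite El in *.
  rewrite rpow_split by lra.
  set (Lp := - ln x) in *. replace ((a - 1) * ln x) with ((1 - a) * Lp) by (unfold Lp; ring).
  pose proof (exp_ineq1_le ((1 - a) * Lp)).
  assert (Lp <= / (1 - a) * exp ((1 - a) * Lp)).
  { apply Rmult_le_reg_l with (1 - a); [lra|].
    rewrite <- Rmult_assoc, Rinv_r by lra. nra. }
  replace (/ (1 - a) * (x * exp ((1 - a) * Lp))) with (x * (/ (1 - a) * exp ((1 - a) * Lp))) by ring.
  apply Rmult_le_compat_l; lra.
Qed.

Lemma gs_lt x s a : 0 < x <= 1 -> 0 < a < 1 -> a <= 2 * s < 1 ->
  (Rpower x (2*s) - x) / (1 - 2*s) <= 2 / (1 - a) * Rpower x a.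
Proof.
  intros Hx Ha Hs. destruct (ln_inv_nonneg x Hx) as [Hl El].
  rewrite !rpow_split by lra.
  set (Lp := - ln x) in *.
  set (c := 1 - 2 * s). set (c0 := 1 - a).
  assert (Hc : 0 < c) by (unfold c; lra). assert (Hcc : c <= c0) by (unfold c, c0; lra).
  replace ((2 * s - 1) * ln x) with (c * Lp) by (unfold c, Lp; ring).
  replace ((a - 1) * ln x) with (c0 * Lp) by (unfold c0, Lp; ring).
  replace ((x * exp (c * Lp) - x) / c) with (x * ((exp (c * Lp) - 1) / c)) by (field; lra).
  replace (2 / c0 * (x * exp (c0 * Lp))) with (x * (2 / c0 * exp (c0 * Lp))) by (field; lra).
  apply Rmult_le_compat_l; [lra|].
  assert (Hc0 : 0 < c0) by lra.
  pose proof (exp_pos (c * Lp)).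
  destruct (Rle_or_lt (c0 / 2) c) as [Hbig|Hsmall].
  - assert (exp (c * Lp) <= exp (c0 * Lp)).
    { destruct (Req_dec (c * Lp) (c0 * Lp)) as [->|]; [lra|]. left. apply exp_increasing. nra. }
    assert (/ c <= 2 / c0).
    { apply Rmult_le_reg_l with (c * c0); [nra|].
      replace (c * c0 * / c) with c0 by (field; lra).
      replace (c * c0 * (2 / c0)) with (2 * c) by (field; lra). lra. }
    unfold Rdiv. apply Rle_trans with (exp (c * Lp) * / c).
    + apply Rmult_le_compat_r; [left; apply Rinv_0_lt_compat; lra| lra].
    + replace (2 * / c0 * exp (c0 * Lp)) with (exp (c0 * Lp) * (2 / c0)) by (unfold Rdiv; ring).
      apply Rmult_le_compat; try lra. left; apply Rinv_0_lt_compat; lra.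
  - pose proof (exp_ineq1_le (- (c * Lp))).
    assert (E1 : exp (c * Lp) * exp (- (c * Lp)) = 1) by (rewrite <- exp_plus; replace (c * Lp + - (c * Lp)) with 0 by ring; apply exp_0).
    assert (H1 : exp (c * Lp) - 1 <= c * Lp * exp (c * Lp)) by nra.
    assert (H2 : (exp (c * Lp) - 1) / c <= Lp * exp (c * Lp)).
    { apply Rmult_le_reg_r with c; [lra|]. replace ((exp (c * Lp) - 1) / c * c) with (exp (c * Lp) - 1) by (field; lra). nra. }
    assert (H3 : exp (c * Lp) <= exp (c0 / 2 * Lp)).
    { destruct (Req_dec (c * Lp) (c0 / 2 * Lp)) as [->|]; [lra|]. left. apply exp_increasing. nra. }
    pose proof (exp_ineq1_le (c0 / 2 * Lp)).
    assert (H5 : Lp <= 2 / c0 * exp (c0 / 2 * Lp)).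
    { apply Rmult_le_reg_l with (c0 / 2); [lra|].
      replace (c0 / 2 * (2 / c0 * exp (c0 / 2 * Lp))) with (exp (c0 / 2 * Lp)) by (field; lra). nra. }
    assert (E2 : exp (c0 * Lp) = exp (c0 / 2 * Lp) * exp (c0 / 2 * Lp)) by (rewrite <- exp_plus; f_equal; field).
    rewrite E2. pose proof (exp_pos (c0 / 2 * Lp)).
    apply Rle_trans with (Lp * exp (c * Lp)); [exact H2|].
    apply Rle_trans with (Lp * exp (c0 / 2 * Lp)); [apply Rmult_le_compat_l; lra|].
    replace (2 / c0 * (exp (c0 / 2 * Lp) * exp (c0 / 2 * Lp))) with ((2 / c0 * exp (c0 / 2 * Lp)) * exp (c0 / 2 * Lp)) by ring.
    apply Rmult_le_compat_r; lra.
Qed.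

Lemma ln1p_ge x : 0 < x -> ln x <= ln (1 + x) /\ 0 <= ln (1 + x).
Proof. intros. split; [apply ln_le; lra|]. rewrite <- ln_1. apply ln_le; lra. Qed.

Definition Llin x := x / (1 + x).
Definition Llin1 x := / (1 + x) ^ 2.
Definition Llin2 x := - 2 / (1 + x) ^ 3.

Lemma Llin_good : Lgood Llin Llin1 Llin2 2.
Proof.
  unfold Lgood, Llin, Llin1, Llin2. split; [lra|]. split; [|split; [|split; [|split; [|split; [|split]]]]].
  - intros x Hx. auto_derive; [lra|]. field. lra.
  - intros x Hx. auto_derive; [rewrite Rmult_1_r; apply Rmult_integral_contrapositive; lra|]. field. lra.
  - intros x Hx. apply (ex_derive_continuous (V := R_NormedModule)). auto_derive.
    repeat (apply Rmult_integral_contrapositive; split); lra.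
  - intros x Hx. split; [apply Rdiv_le_0_compat; lra|].
    apply Rmult_le_reg_r with (1 + x); [lra|]. field_simplify; lra.
  - intros x Hx. left. apply Rinv_0_lt_compat. apply pow_lt. lra.
  - intros x Hx. apply Rmult_le_reg_r with ((1 + x) ^ 2); [apply pow_lt; lra|].
    field_simplify; try lra. nra.
  - intros x Hx. apply Rmult_le_reg_r with ((1 + x) ^ 3); [apply pow_lt; lra|].
    field_simplify; try lra. nra.
Qed.

Lemma Llin_half x : 0 < x <= 1 -> x <= 2 * Llin x.
Proof.
  intros Hx. unfold Llin. apply Rmult_le_reg_r with (1 + x); [lra|].
  replace (2 * (x / (1 + x)) * (1 + x)) with (2 * x) by (field; lra). nra.
Qed.

Lemma Llin_spec s0 : 1/2 < s0 -> Lspec s0 Llin (2 + 2 / (2 * s0 - 1)).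
Proof.
  intros Hs0. assert (Hp : 0 < 2 / (2 * s0 - 1)) by (apply Rdiv_lt_0_compat; lra).
  split; [lra|]. intros x Hx. pose proof (Llin_half x Hx).
  assert (HL : 0 <= Llin x) by (unfold Llin; apply Rdiv_le_0_compat; lra).
  split; [|split].
  - nra.
  - intros s Hs Hs2. destruct (gs_gt x s Hx ltac:(lra)) as [_ H2].
    assert (x / (2 * s - 1) <= x / (2 * s0 - 1)).
    { unfold Rdiv. apply Rmult_le_compat_l; [lra|]. apply Rinv_le_contravar; lra. }
    assert (x / (2 * s0 - 1) <= 2 / (2 * s0 - 1) * Llin x).
    { unfold Rdiv. replace (2 * / (2 * s0 - 1) * Llin x) with ((2 * Llin x) * / (2 * s0 - 1)) by ring.
      apply Rmult_le_compat_r; [left; apply Rinv_0_lt_compat; lra|lra]. }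
    nra.
  - intros; lra.
Qed.

Definition Lpw (a x : R) := exp (a * (ln x - ln (1 + x))).
Definition Lpw1 (a x : R) := a * Lpw a x / (x * (1 + x)).
Definition Lpw2 (a x : R) := a * Lpw a x * (a - 1 - 2 * x) / (x * (1 + x)) ^ 2.

Lemma Lpw_good a : 0 < a < 1 -> Lgood (Lpw a) (Lpw1 a) (Lpw2 a) 2.
Proof.
  intros Ha. unfold Lgood, Lpw1, Lpw2. split; [lra|].
  assert (Hd : forall x, 0 < x -> is_derive (Lpw a) x (a * Lpw a x / (x * (1 + x)))).
  { intros x Hx. unfold Lpw. auto_derive; [repeat split; lra|]. unfold Rminus; field. lra. }
  split; [|split; [|split; [|split; [|split; [|split]]]]].
  - exact Hd.
  - intros x Hx.
    apply (dfext (fun y => a * (Lpw a y * / (y * (1 + y))))); [intros; unfold Rdiv; ring|].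
    eapply dext. apply (dmul (fun _ => a)); [apply dcst|].
    apply dmul; [apply Hd; lra|].
    auto_derive; [nra|reflexivity].
    simpl. field. lra.
  - intros x Hx.
    apply (continuous_ext (fun y => a * Lpw a y * (a - 1 - 2 * y) * / (y * (1 + y)) ^ 2)); [intros; simpl; unfold Rdiv; ring|].
    apply cmul; [apply cmul; [apply (cmul (fun _ => a)); [apply continuous_const| eapply cder; apply Hd; lra]|]|].
    + apply (ex_derive_continuous (V := R_NormedModule)). auto_derive. auto.
    + apply (ex_derive_continuous (V := R_NormedModule)). auto_derive.
      rewrite Rmult_1_r. apply Rmult_integral_contrapositive; split; apply Rmult_integral_contrapositive; lra.
  - intros x Hx. split; [left; apply exp_pos|]. unfold Lpw.
    apply Rle_trans with (exp 0); [|rewrite exp_0; lra].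
    destruct (ln1p_ge x Hx). destruct (Req_dec (a * (ln x - ln (1 + x))) 0) as [->|]; [lra|].
    left. apply exp_increasing. nra.
  - intros x Hx. unfold Lpw. apply Rdiv_le_0_compat; [|nra]. pose proof (exp_pos (a * (ln x - ln (1 + x)))). nra.
  - intros x Hx. pose proof (exp_pos (a * (ln x - ln (1 + x)))). fold (Lpw a x) in H.
    replace (x * (a * Lpw a x / (x * (1 + x)))) with (a * Lpw a x / (1 + x)) by (field; lra).
    apply Rmult_le_reg_r with (1 + x); [lra|].
    replace (a * Lpw a x / (1 + x) * (1 + x)) with (a * Lpw a x) by (field; lra). nra.
  - intros x Hx. pose proof (exp_pos (a * (ln x - ln (1 + x)))). fold (Lpw a x) in H.
    replace (x ^ 2 * (a * Lpw a x * (a - 1 - 2 * x) / (x * (1 + x)) ^ 2))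
      with (Lpw a x * (a * (a - 1 - 2 * x) / (1 + x) ^ 2)) by (field; lra).
    assert (- 2 <= a * (a - 1 - 2 * x) / (1 + x) ^ 2).
    { apply Rmult_le_reg_r with ((1 + x) ^ 2); [apply pow_lt; lra|].
      replace (a * (a - 1 - 2 * x) / (1 + x) ^ 2 * (1 + x) ^ 2) with (a * (a - 1 - 2 * x)) by (field; lra).
      nra. }
    nra.
Qed.

Lemma Lpw_lower a x : 0 < a < 1 -> 0 < x <= 1 -> x <= 2 * Lpw a x /\ Rpower x a <= 2 * Lpw a x.
Proof.
  intros Ha Hx. destruct (ln1p_ge x ltac:(lra)) as [H1 H2].
  assert (Hl2 : ln (1 + x) <= ln 2) by (apply ln_le; lra).
  assert (Hlx : ln x <= 0) by (rewrite <- ln_1; apply ln_le; lra).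
  assert (E2 : exp (- ln 2) = / 2) by (rewrite exp_Ropp, exp_ln; lra).
  unfold Lpw. split.
  - assert (ln x - ln 2 <= a * (ln x - ln (1 + x))) by nra.
    assert (exp (ln x - ln 2) <= exp (a * (ln x - ln (1 + x)))).
    { destruct (Req_dec (ln x - ln 2) (a * (ln x - ln (1 + x)))) as [->|]; [lra|]. left; apply exp_increasing; lra. }
    unfold Rminus in H0 at 1. rewrite exp_plus, exp_ln, E2 in H0 by lra. lra.
  - unfold Rpower.
    assert (a * ln x - ln 2 <= a * (ln x - ln (1 + x))) by nra.
    assert (exp (a * ln x - ln 2) <= exp (a * (ln x - ln (1 + x)))).
    { destruct (Req_dec (a * ln x - ln 2) (a * (ln x - ln (1 + x)))) as [->|]; [lra|]. left; apply exp_increasing; lra. }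
    unfold Rminus in H0 at 1. rewrite exp_plus, E2 in H0. lra.
Qed.

Lemma Lpw_spec s0 : 0 < s0 < 1/2 -> Lspec s0 (Lpw (2 * s0)) (2 + 4 / (1 - 2 * s0)).
Proof.
  intros Hs0. set (a := 2 * s0). assert (Ha : 0 < a < 1) by (unfold a; lra).
  assert (Hk : 0 < 4 / (1 - a)) by (apply Rdiv_lt_0_compat; lra).
  split; [lra|]. intros x Hx. destruct (Lpw_lower a x Ha Hx) as [H1 H2].
  assert (HL : 0 <= Lpw a x) by (left; apply exp_pos).
  assert (Hxl : x * ln (1 / x) <= 4 / (1 - a) * Lpw a x).
  { pose proof (xlog_pow x a Hx Ha).
    assert (/ (1 - a) * Rpower x a <= / (1 - a) * (2 * Lpw a x)).
    { apply Rmult_le_compat_l; [left; apply Rinv_0_lt_compat; lra|lra]. }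
    assert (/ (1 - a) * (2 * Lpw a x) <= 4 / (1 - a) * Lpw a x).
    { unfold Rdiv. assert (0 < / (1 - a)) by (apply Rinv_0_lt_compat; lra). nra. }
    lra. }
  split; [|split].
  - nra.
  - intros s Hs Hs2. destruct (Rlt_or_le s (1/2)) as [Hlt|Hge].
    + pose proof (gs_lt x s a Hx Ha ltac:(unfold a; lra)).
      assert (2 / (1 - a) * Rpower x a <= 4 / (1 - a) * Lpw a x).
      { unfold Rdiv. assert (0 < / (1 - a)) by (apply Rinv_0_lt_compat; lra).
        replace (4 * / (1 - a) * Lpw a x) with (2 * / (1 - a) * (2 * Lpw a x)) by ring.
        apply Rmult_le_compat_l; lra. }
      nra.
    + destruct (gs_gt x s Hx ltac:(lra)) as [G _]. nra.
  - intros _. nra.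
Qed.

Definition Llg x := x / (1 + x) * (1 + ln (1 + x) - ln x).
Definition Llg1 x := (ln (1 + x) - ln x) / (1 + x) ^ 2.
Definition Llg2 x := - / (x * (1 + x) ^ 3) - 2 * (ln (1 + x) - ln x) / (1 + x) ^ 3.

Lemma Llg_good : Lgood Llg Llg1 Llg2 3.
Proof.
  unfold Lgood, Llg, Llg1, Llg2. split; [lra|].
  split; [|split; [|split; [|split; [|split; [|split]]]]].
  - intros x Hx. auto_derive; [lra|]. field. lra.
  - intros x Hx. auto_derive; [repeat split; try lra; rewrite Rmult_1_r; apply Rmult_integral_contrapositive; lra|]. field. lra.
  - intros x Hx. apply (ex_derive_continuous (V := R_NormedModule)). auto_derive.
    repeat split; try lra; repeat (apply Rmult_integral_contrapositive; split); lra.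
  - intros x Hx. destruct (ln1p_ge x Hx).
    assert (E : ln (1 + x) - ln x = ln (1 + / x)).
    { rewrite <- ln_div by lra. f_equal. field. lra. }
    assert (ln (1 + / x) <= / x).
    { pose proof (exp_ineq1_le (ln (1 + / x))). rewrite exp_ln in H1.
      - lra.
      - pose proof (Rinv_0_lt_compat x Hx). lra. }
    split.
    + apply Rmult_le_pos; [apply Rdiv_le_0_compat|]; lra.
    + apply Rmult_le_reg_r with (1 + x); [lra|].
      replace (x / (1 + x) * (1 + ln (1 + x) - ln x) * (1 + x)) with (x + x * (ln (1 + x) - ln x)) by (field; lra).
      rewrite E. assert (x * ln (1 + / x) <= x * / x) by (apply Rmult_le_compat_l; lra).
      rewrite Rinv_r in H2 by lra. lra.
  - intros x Hx. destruct (ln1p_ge x Hx). apply Rdiv_le_0_compat; [lra|]. apply pow_lt; lra.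
  - intros x Hx. destruct (ln1p_ge x Hx).
    replace (x * ((ln (1 + x) - ln x) / (1 + x) ^ 2)) with (x / (1 + x) * ((ln (1 + x) - ln x) / (1 + x))) by (field; lra).
    apply Rmult_le_compat_l; [apply Rdiv_le_0_compat; lra|].
    apply Rmult_le_reg_r with (1 + x); [lra|].
    replace ((ln (1 + x) - ln x) / (1 + x) * (1 + x)) with (ln (1 + x) - ln x) by (field; lra). nra.
  - intros x Hx. destruct (ln1p_ge x Hx). set (l := ln (1 + x) - ln x).
    replace (x ^ 2 * (- / (x * (1 + x) ^ 3) - 2 * l / (1 + x) ^ 3))
      with (- (x / (1 + x)) * (/ (1 + x) ^ 2) - 2 * (x / (1 + x)) * l * (x / (1 + x) ^ 2)) by (field; lra).
    replace (- 3 * (x / (1 + x) * (1 + l))) with (- (x / (1 + x)) - 2 * (x / (1 + x)) * l - 2 * (x / (1 + x)) - (x / (1 + x)) * l) by ring.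
    assert (Hy : 0 <= x / (1 + x)) by (apply Rdiv_le_0_compat; lra).
    assert (Hl : 0 <= l) by (unfold l; lra).
    assert (Hi1 : / (1 + x) ^ 2 <= 1).
    { rewrite <- Rinv_1. apply Rinv_le_contravar; [lra|]. nra. }
    assert (Hi2 : x / (1 + x) ^ 2 <= 1).
    { apply Rmult_le_reg_r with ((1 + x) ^ 2); [apply pow_lt; lra|]. field_simplify; [nra|lra]. }
    assert (0 <= / (1 + x) ^ 2) by (left; apply Rinv_0_lt_compat, pow_lt; lra).
    assert (0 <= x / (1 + x) ^ 2) by (apply Rdiv_le_0_compat; [lra|apply pow_lt; lra]).
    assert (x / (1 + x) * / (1 + x) ^ 2 <= x / (1 + x)) by nra.
    assert (x / (1 + x) * l * (x / (1 + x) ^ 2) <= x / (1 + x) * l).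
    { assert (0 <= x / (1 + x) * l) by nra. nra. }
    set (y := x / (1 + x)) in *. set (I1 := / (1 + x) ^ 2) in *. set (K := x / (1 + x) ^ 2) in *. assert (0 <= y * l) by nra. replace (1 + ln (1 + x) - ln x) with (1 + l) by (unfold l; ring). lra.
Qed.

Lemma Llg_spec : Lspec (1/2) Llg 2.
Proof.
  split; [lra|]. intros x Hx. destruct (ln1p_ge x ltac:(lra)) as [H1 H2].
  destruct (ln_inv_nonneg x Hx) as [Hl El].
  assert (Hy : x / 2 <= x / (1 + x)).
  { unfold Rdiv. apply Rmult_le_compat_l; [lra|]. apply Rinv_le_contravar; lra. }
  assert (HL : x / 2 * (1 - ln x) <= Llg x).
  { unfold Llg. apply Rmult_le_compat; [lra| |lra|lra].
    assert (ln x <= ln 1) by (apply ln_le; lra). rewrite ln_1 in *. lra. }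
  rewrite El.
  assert (Hlx : ln x <= 0) by (rewrite <- ln_1; apply ln_le; lra).
  assert (HxL : x * - ln x <= 2 * Llg x) by nra.
  split; [|split].
  - nra.
  - intros s Hs Hs2. destruct (gs_gt x s Hx ltac:(lra)) as [G _]. rewrite El in G. lra.
  - intros _. lra.
Qed.

Lemma dsqrt t : 0 < t -> is_derive sqrt t (/ (2 * sqrt t)).
Proof. intros. auto_derive; auto. field. apply Rgt_not_eq, sqrt_lt_R0; lra. Qed.

Lemma sq t : 0 < t -> 0 < sqrt t /\ sqrt t * sqrt t = t.
Proof. intros. split; [apply sqrt_lt_R0; lra| apply sqrt_sqrt; lra]. Qed.

Definition P1 (w : R -> R) t := Derive w (sqrt t) / (2 * sqrt t).
Definition P2 (w : R -> R) t :=
  Derive_n w 2 (sqrt t) / (4 * t) - Derive w (sqrt t) / (4 * t * sqrt t).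

Lemma P_deriv w t : wgood w -> 0 < t -> is_derive (fun t => w (sqrt t)) t (P1 w t).
Proof.
  intros Hw Ht. destruct (sq t Ht) as [H1 H2]. pose proof Hw as (_&_&_&_&Hd&_).
  eapply dext. apply (dcomp w sqrt); [apply dsqrt; lra| apply Hd; lra].
  unfold P1. simpl. field. lra.
Qed.

Lemma P1_deriv w t : wgood w -> 0 < t -> is_derive (P1 w) t (P2 w t).
Proof.
  intros Hw Ht. destruct (sq t Ht) as [H1 H2]. pose proof Hw as (_&_&_&_&Hd&Hd2&_).
  apply (dfext (fun y => Derive w (sqrt y) * / (2 * sqrt y))); [intros; unfold P1, Rdiv; reflexivity|].
  eapply dext. apply dmul.
  - apply (dcomp (Derive w) sqrt); [apply dsqrt; lra| apply Hd2; lra].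
  - apply (dcomp (fun u => / (2 * u)) sqrt); [apply dsqrt; lra|].
    auto_derive; [lra|reflexivity].
  - unfold P2. simpl. set (r := sqrt t) in *. set (W2 := Derive (fun x : R => Derive (fun x0 : R => w x0) x) r). replace t with (r * r) by lra. field. lra.
Qed.

Definition gw (L w : R -> R) v := L (w v) / v.
Definition zwB (A : R) (L w : R -> R) t :=
  if Rle_dec t 0 then 0 else 2 * A * Jf (gw L w) (sqrt t).
Definition QB (A : R) (L w : R -> R) t := A * L (w (sqrt t)).
Definition QB1 (A : R) (L L1 w : R -> R) t := A * L1 (w (sqrt t)) * P1 w t.
Definition QB2 (A : R) (L L1 L2 w : R -> R) t :=
  A * (L2 (w (sqrt t)) * P1 w t ^ 2 + L1 (w (sqrt t)) * P2 w t).

Lemma gw_ok w L L1 L2 cL : wgood w -> (forall x, 0 < x -> 0 < w x) -> Lgood L L1 L2 cL ->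
  (exists M, forall e, 0 < e < 1 -> RInt (gw L w) e 1 <= M) -> gok (gw L w).
Proof.
  intros Hw Hwp HL HM. split; [|split; [|exact HM]].
  - intros v Hv. unfold gw.
    apply (continuous_ext (fun y => L (w y) * / y)); [intros; reflexivity|].
    apply cmul.
    + apply (ccomp L w). now apply wgood_cont'. apply (Lcont L L1 L2 cL); auto.
    + apply (ex_derive_continuous (V := R_NormedModule)). auto_derive. lra.
  - intros v Hv. unfold gw. destruct HL as (_&_&_&_&Hb&_).
    apply Rdiv_le_0_compat; [apply Hb; auto|lra].
Qed.

Lemma B_partA iota w L L1 L2 cL A :
  cond_M iota w -> (forall x, 0 < x -> 0 < w x) -> Lgood L L1 L2 cL -> 0 <= A ->
  (exists M, forall e, 0 < e < 1 -> RInt (gw L w) e 1 <= M) ->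
  partA (zwB A L w) (QB A L w) (QB1 A L L1 w) (QB2 A L L1 L2 w).
Proof.
  intros HM Hwp HL HA HB.
  pose proof (condM_wgood _ _ HM) as Hw.
  pose proof (gw_ok w L L1 L2 cL Hw Hwp HL HB) as Hg.
  pose proof HL as (HcL&HLd&HL1d&HL2c&HLb&HL1p&HxL1&HL2b).
  pose proof Hw as (Hwn&Hwm&Hwc&Hw0&Hwd&Hwd2&Hwc2).
  assert (HQd : forall t, 0 < t -> is_derive (QB A L w) t (QB1 A L L1 w t)).
  { intros t Ht. destruct (sq t Ht) as [S1 S2].
    unfold QB, QB1. eapply dext.
    apply (dmul (fun _ => A)); [apply dcst|].
    apply (dcomp L (fun t => w (sqrt t))); [apply P_deriv; auto| apply HLd; auto].
    simpl; ring. }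
  split; [|split; [|split; [|split; [|split; [|split; [|split; [|split; [|split; [|split; [|split]]]]]]]]]].
  - intros t Ht. unfold zwB. destruct (Rle_dec t 0); [reflexivity|lra].
  - intros e He. destruct (Jf_small _ Hg (e / (2 * A + 1))) as [d [Hd Hdd]].
    { apply Rdiv_lt_0_compat; lra. }
    exists (d * d). split; [nra|]. intros t Ht. unfold zwB.
    destruct (Rle_dec t 0); [lra|]. destruct (sq t ltac:(lra)) as [S1 S2].
    assert (sqrt t < d).
    { destruct (Rlt_or_le (sqrt t) d); auto. nra. }
    specialize (Hdd (sqrt t) ltac:(lra)).
    pose proof (Jf_nonneg _ (sqrt t) Hg S1).
    rewrite Rabs_right by (apply Rle_ge; apply Rmult_le_pos; lra).
    assert (2 * A * Jf (gw L w) (sqrt t) <= (2 * A + 1) * Jf (gw L w) (sqrt t)) by nra.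
    assert ((2 * A + 1) * Jf (gw L w) (sqrt t) < (2 * A + 1) * (e / (2 * A + 1))).
    { apply Rmult_lt_compat_l; lra. }
    replace ((2 * A + 1) * (e / (2 * A + 1))) with e in H2 by (field; lra). lra.
  - intros t Ht. destruct (sq t Ht) as [S1 S2].
    apply (is_derive_ext_loc (fun t => 2 * A * Jf (gw L w) (sqrt t))).
    { generalize (locally_pos t Ht). apply filter_imp. intros u Hu. unfold zwB.
      destruct (Rle_dec u 0); [lra|reflexivity]. }
    eapply dext. apply (dmul (fun _ => 2 * A)); [apply dcst|].
    apply (dcomp (Jf (gw L w)) sqrt); [apply dsqrt; auto| apply Jf_deriv; auto].
    unfold QB, gw. simpl. set (r := sqrt t) in *. replace (A * L (w r) / t) with (A * L (w r) / (r * r)) by (rewrite S2; reflexivity). field. lra.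
  - exact HQd.
  - intros t Ht. destruct (sq t Ht) as [S1 S2]. unfold QB1, QB2.
    apply (dfext (fun y => A * (L1 (w (sqrt y)) * P1 w y))); [intros; simpl; ring|].
    eapply dext. apply (dmul (fun _ => A)); [apply dcst|].
    apply dmul; [|apply P1_deriv; auto].
    apply (dcomp L1 (fun t => w (sqrt t))); [apply P_deriv; auto| apply HL1d; auto].
    simpl. ring.
  - intros t Ht. destruct (sq t Ht) as [S1 S2]. unfold QB2, P1, P2.
    assert (Cw1 : continuous (fun y => Derive w (sqrt y)) t).
    { apply (ccomp (Derive w) sqrt). eapply cder; apply dsqrt; auto. eapply cder; apply Hwd2; auto. }
    assert (Cw2 : continuous (fun y => Derive_n w 2 (sqrt y)) t).
    { apply (ccomp (Derive_n w 2) sqrt). eapply cder; apply dsqrt; auto. apply Hwc2; auto. }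
    assert (Cw : continuous (fun y => w (sqrt y)) t) by (eapply cder; apply P_deriv; auto).
    assert (CL2 : continuous (fun y => L2 (w (sqrt y))) t) by (apply (ccomp L2); auto).
    assert (CL1 : continuous (fun y => L1 (w (sqrt y))) t) by (apply (ccomp L1); auto; eapply cder; apply HL1d; auto).
    assert (Ci1 : continuous (fun y => / (2 * sqrt y)) t).
    { apply (ccomp (fun u => / (2 * u)) sqrt). eapply cder; apply dsqrt; auto.
      apply (ex_derive_continuous (V := R_NormedModule)). auto_derive. lra. }
    assert (Ci2 : continuous (fun y => / (4 * y)) t).
    { apply (ex_derive_continuous (V := R_NormedModule)). auto_derive. lra. }
    assert (Ci3 : continuous (fun y => / (4 * y * sqrt y)) t).
    { apply (ex_derive_continuous (V := R_NormedModule)). auto_derive. repeat split; try lra. nra. }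
    apply (continuous_ext (fun y => A * (L2 (w (sqrt y)) * ((Derive w (sqrt y) * / (2 * sqrt y)) * (Derive w (sqrt y) * / (2 * sqrt y))) + L1 (w (sqrt y)) * (Derive_n w 2 (sqrt y) * / (4 * y) + (-1) * (Derive w (sqrt y) * / (4 * y * sqrt y)))))).
    { intros; simpl; unfold Rdiv; ring. }
    apply (cmul (fun _ => A)); [apply continuous_const|].
    apply cplus; apply cmul; auto.
    + apply cmul; apply cmul; auto.
    + apply cplus; [apply cmul; auto|]. apply (cmul (fun _ => -1)); [apply continuous_const|]. apply cmul; auto.
  - intros t Ht. destruct (sq t Ht) as [S1 S2]. unfold QB.
    apply Rmult_le_pos; [lra|apply HLb; auto].
  - intros x y Hx Hxy. destruct (sq x Hx) as [S1 S2]. destruct (sq y ltac:(lra)) as [T1 T2].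
    unfold QB. apply Rmult_le_compat_l; [lra|].
    apply (Lmono L L1 L2 cL); auto. apply Hwm; simpl; try lra. apply sqrt_le_1_alt; lra.
  - intros x y Hx Hxy. destruct (sq x Hx) as [S1 S2]. destruct (sq y ltac:(lra)) as [T1 T2].
    assert (Hs : sqrt x <= sqrt y) by (apply sqrt_le_1_alt; lra).
    assert (Px := Hwp (sqrt x) S1). assert (Py := Hwp (sqrt y) T1).
    assert (HwL : w (sqrt x) <= w (sqrt y)) by (apply Hwm; simpl; lra).
    pose proof (Lratio L L1 L2 cL _ _ HL Px HwL) as R1.
    pose proof (wgood_chord w _ _ Hw S1 Hs) as R2.
    assert (R3 : / sqrt y <= / sqrt x) by (apply Rinv_le_contravar; lra).
    unfold QB.
    replace (A * L (w (sqrt y)) / y) with (A * ((L (w (sqrt y)) / w (sqrt y)) * (w (sqrt y) / sqrt y) * / sqrt y))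
      by (set (r := sqrt y) in *; rewrite <- T2; field; lra).
    replace (A * L (w (sqrt x)) / x) with (A * ((L (w (sqrt x)) / w (sqrt x)) * (w (sqrt x) / sqrt x) * / sqrt x))
      by (set (r := sqrt x) in *; rewrite <- S2; field; lra).
    apply Rmult_le_compat_l; [lra|].
    assert (0 <= L (w (sqrt y)) / w (sqrt y)) by (apply Rdiv_le_0_compat; [apply HLb|]; lra).
    assert (0 <= w (sqrt y) / sqrt y) by (apply Rdiv_le_0_compat; lra).
    assert (0 <= / sqrt y) by (left; apply Rinv_0_lt_compat; lra).
    apply Rmult_le_compat; try lra.
    + apply Rmult_le_pos; lra.
    + apply Rmult_le_compat; lra.
  - intros t Ht. destruct (sq t Ht) as [S1 S2]. unfold QB, QB1, P1.
    pose proof (wgood_xd1 w (sqrt t) Hw S1) as X.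
    pose proof (HL1p _ (Hwp _ S1)). pose proof (HxL1 _ (Hwp _ S1)). pose proof (Hwp _ S1).
    replace (t * (A * L1 (w (sqrt t)) * (Derive w (sqrt t) / (2 * sqrt t))))
      with (A * (L1 (w (sqrt t)) * (sqrt t * Derive w (sqrt t))) / 2)
      by (set (r := sqrt t) in *; rewrite <- S2; field; lra).
    assert (L1 (w (sqrt t)) * (sqrt t * Derive w (sqrt t)) <= L1 (w (sqrt t)) * w (sqrt t))
      by (apply Rmult_le_compat_l; lra).
    assert (0 <= L (w (sqrt t))) by (apply HLb; lra).
    assert (A * (L1 (w (sqrt t)) * (sqrt t * Derive w (sqrt t))) <= A * L (w (sqrt t))).
    { apply Rmult_le_compat_l; lra. }
    assert (0 <= A * L (w (sqrt t))) by (apply Rmult_le_pos; lra). lra.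
  - destruct HM as (_&_&_&_&_&_&_&_&[t0 [Ht0 [_ Hw2]]]).
    exists (cL / 4 + 5 / 4 + 1), (Rmin (1/2) (t0 * t0)).
    assert (Hm : 0 < Rmin (1/2) (t0 * t0)) by (apply Rmin_pos; nra).
    assert (Hm1 : Rmin (1/2) (t0 * t0) <= 1/2) by apply Rmin_l.
    assert (Hm2 : Rmin (1/2) (t0 * t0) <= t0 * t0) by apply Rmin_r.
    split; [lra|]. split; [lra|]. intros t Ht.
    destruct (sq t ltac:(lra)) as [S1 S2]. set (v := sqrt t) in *.
    assert (Hv : v < t0) by (destruct (Rlt_or_le v t0); auto; nra).
    specialize (Hw2 v ltac:(lra)).
    pose proof (wgood_xd1 w v Hw S1) as X. pose proof (wgood_d1_nonneg w v Hw S1) as X0.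
    set (P := w v) in *. assert (HP : 0 < P) by (apply Hwp; lra).
    set (d1 := Derive w v) in *. set (d2 := Derive_n w 2 v) in *.
    unfold QB, QB2, P1, P2. fold v. fold P. fold d1. fold d2.
    set (h := v * d1 / 2).
    assert (E : t ^ 2 * (A * (L2 P * (d1 / (2 * v)) ^ 2 + L1 P * (d2 / (4 * t) - d1 / (4 * t * v))))
      = A * (L2 P * h ^ 2 + L1 P * ((v ^ 2 * d2 - v * d1) / 4))).
    { unfold h. rewrite <- S2. field. lra. }
    rewrite E.
    assert (Hh0 : 0 <= h) by (unfold h; apply Rmult_le_pos; [apply Rmult_le_pos|]; lra).
    assert (Hh1 : h <= P / 2) by (unfold h; lra).
    assert (T1 : - cL * L P / 4 <= L2 P * h ^ 2).
    { destruct (Rle_or_lt 0 (L2 P)) as [Hp|Hn].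
      - assert (0 <= L2 P * h ^ 2) by (apply Rmult_le_pos; [lra|apply pow2_ge_0]).
        assert (0 <= L P) by (apply HLb; lra). assert (0 <= cL * L P) by (apply Rmult_le_pos; lra). lra.
      - specialize (HL2b P HP).
        assert (h ^ 2 <= P ^ 2 / 4) by (simpl; nra).
        assert (L2 P * (P ^ 2 / 4) <= L2 P * h ^ 2) by (apply Rmult_le_compat_neg_l; lra).
        assert (L2 P * (P ^ 2 / 4) = P ^ 2 * L2 P / 4) by field. lra. }
    assert (T2 : - (5 / 4) * L P <= L1 P * ((v ^ 2 * d2 - v * d1) / 4)).
    { assert (v ^ 2 * d2 - v * d1 >= - 5 * P).
      { simpl in Hw2 |- *. rewrite Rmult_1_r in *. lra. }
      pose proof (HL1p P HP). pose proof (HxL1 P HP).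
      assert (L1 P * (- 5 * P) <= L1 P * (v ^ 2 * d2 - v * d1)) by (apply Rmult_le_compat_l; lra).
      lra. }
    assert (0 <= L P) by (apply HLb; lra).
    assert (- (cL / 4 + 5 / 4 + 1) * (A * L P) <= A * (- cL * L P / 4 + - (5 / 4) * L P)).
    { assert (0 <= A * L P) by (apply Rmult_le_pos; lra).
      replace (A * (- cL * L P / 4 + - (5 / 4) * L P)) with (- (cL / 4 + 5 / 4) * (A * L P)) by field. lra. }
    assert (A * (- cL * L P / 4 + - (5 / 4) * L P) <= A * (L2 P * h ^ 2 + L1 P * ((v ^ 2 * d2 - v * d1) / 4))).
    { apply Rmult_le_compat_l; lra. }
    lra.
  - exists (2 * A * (Rabs (J0 (gw L w)) + 1)). intros t Ht.
    destruct (sq t Ht) as [S1 S2]. unfold zwB. destruct (Rle_dec t 0); [lra|].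
    assert (Hg1 : forall v, 0 < v -> gw L w v <= / v).
    { intros v Hv. unfold gw. unfold Rdiv. rewrite <- (Rmult_1_l (/ v)) at 2.
      apply Rmult_le_compat_r; [left; apply Rinv_0_lt_compat; lra| apply HLb; auto]. }
    pose proof (Jf_bound _ (sqrt t) Hg Hg1 S1).
    assert (Hq : ln (1 + sqrt t) <= 1 + ln (1 + t)).
    { assert (sqrt t <= 1 + t) by nra.
      assert (ln (1 + sqrt t) <= ln (2 * (1 + t))) by (apply ln_le; lra).
      rewrite ln_mult in H1 by lra.
      assert (ln 2 <= 1).
      { rewrite <- ln_exp with 1. apply ln_le; [lra|]. pose proof (exp_ineq1_le 1). lra. }
      lra. }
    pose proof (Rle_abs (J0 (gw L w))).
    assert (0 <= ln (1 + t)) by (rewrite <- ln_1; apply ln_le; lra).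
    assert (Jf (gw L w) (sqrt t) <= Rabs (J0 (gw L w)) + 1 + ln (1 + t)) by lra.
    assert (2 * A * Jf (gw L w) (sqrt t) <= 2 * A * (Rabs (J0 (gw L w)) + 1 + ln (1 + t)))
      by (apply Rmult_le_compat_l; lra).
    assert (2 * A * ln (1 + t) <= 2 * A * (Rabs (J0 (gw L w)) + 1) * ln (1 + t)).
    { assert (0 <= Rabs (J0 (gw L w))) by apply Rabs_pos.
      assert (0 <= 2 * A * ln (1 + t)) by (apply Rmult_le_pos; lra).
      replace (2 * A * (Rabs (J0 (gw L w)) + 1) * ln (1 + t)) with (2 * A * ln (1 + t) * (Rabs (J0 (gw L w)) + 1)) by ring.
      nra. }
    lra.
Qed.

Lemma dom_bound (g D1 D2 : R -> R) (al be : R) :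
  0 <= al -> 0 <= be ->
  (forall v, 0 < v -> continuous g v) ->
  (forall v, 0 < v <= 1 -> 0 <= D1 v) -> (forall v, 0 < v <= 1 -> 0 <= D2 v) ->
  ex_RInt_gen D1 (at_right 0) (at_point 1) -> ex_RInt_gen D2 (at_right 0) (at_point 1) ->
  (forall v, 0 < v <= 1 -> g v <= al * D1 v + be * D2 v) ->
  exists M, forall e, 0 < e < 1 -> RInt g e 1 <= M.
Proof.
  intros Hal Hbe Hc H1 H2 E1 E2 Hle.
  destruct (gen_bound D1 H1 E1) as [M1 HM1]. destruct (gen_bound D2 H2 E2) as [M2 HM2].
  exists (al * M1 + be * M2). intros e He.
  destruct (HM1 e He) as [X1 B1]. destruct (HM2 e He) as [X2 B2].
  assert (Xg : ex_RInt g e 1).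
  { apply (ex_RInt_continuous (V := R_CompleteNormedModule)). intros z Hz. apply Hc.
    assert (0 < Rmin e 1) by (apply Rmin_pos; lra). lra. }
  assert (Xs : ex_RInt (fun v => al * D1 v + be * D2 v) e 1).
  { apply (ex_RInt_plus (fun v => al * D1 v) (fun v => be * D2 v));
    apply (ex_RInt_scal (V := R_CompleteNormedModule)); auto. }
  apply Rle_trans with (RInt (fun v => al * D1 v + be * D2 v) e 1).
  - apply RInt_le; auto; [lra|]. intros x Hx. apply Hle. lra.
  - rewrite (RInt_plus (fun v => al * D1 v) (fun v => be * D2 v)).
    2,3: apply (ex_RInt_scal (V := R_CompleteNormedModule)); auto.
    rewrite (RInt_scal D1), (RInt_scal D2) by auto.
    unfold plus, scal; simpl; unfold mult; simpl.
    apply Rplus_le_compat; apply Rmult_le_compat_l; auto.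
Qed.

Lemma gw_cont w L L1 L2 cL : wgood w -> (forall x, 0 < x -> 0 < w x) -> Lgood L L1 L2 cL ->
  forall v, 0 < v -> continuous (gw L w) v.
Proof.
  intros Hw Hwp HL v Hv. unfold gw.
  apply (continuous_ext (fun y => L (w y) * / y)); [intros; reflexivity|].
  apply cmul.
  + apply (ccomp L w). now apply wgood_cont'. apply (Lcont L L1 L2 cL); auto.
  + apply (ex_derive_continuous (V := R_NormedModule)). auto_derive. lra.
Qed.

Lemma wle1 iota w v : cond_M iota w -> 0 < v <= 1 -> w v <= w 1.
Proof.
  intros HM Hv. pose proof (condM_wgood _ _ HM) as (_&Hn&_). apply Hn; simpl; lra.
Qed.

Lemma wv_pos_int iota w : cond_M iota w -> (forall v, 0 < v <= 1 -> 0 <= w v / v) /\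
  ex_RInt_gen (fun t => w t / t) (at_right 0) (at_point 1).
Proof.
  intros HM. pose proof (condM_wgood _ _ HM) as (Hp&_).
  split; [intros v Hv; apply Rdiv_le_0_compat; [apply Hp|]; lra|].
  destruct HM as (_&_&_&_&_&_&E&_). exact E.
Qed.

Lemma int_lin iota w : cond_M iota w -> (forall x, 0 < x -> 0 < w x) ->
  exists M, forall e, 0 < e < 1 -> RInt (gw Llin w) e 1 <= M.
Proof.
  intros HM Hwp. pose proof (condM_wgood _ _ HM) as Hw.
  destruct (wv_pos_int _ _ HM) as [Hp E].
  apply (dom_bound _ (fun t => w t / t) (fun t => w t / t) 0 1); auto; try lra.
  - apply (gw_cont w Llin Llin1 Llin2 2 Hw Hwp Llin_good).
  - intros v Hv. unfold gw, Llin. specialize (Hwp v ltac:(lra)).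
    rewrite Rmult_0_l, Rplus_0_l, Rmult_1_l. unfold Rdiv.
    apply Rmult_le_compat_r; [left; apply Rinv_0_lt_compat; lra|].
    apply Rmult_le_reg_r with (1 + w v); [lra|]. rewrite Rmult_assoc, Rinv_l by lra. nra.
Qed.

Lemma int_pow iota w s0 : cond_M iota w -> dini2s s0 w -> 0 < s0 < 1/2 -> (forall x, 0 < x -> 0 < w x) ->
  exists M, forall e, 0 < e < 1 -> RInt (gw (Lpw (2 * s0)) w) e 1 <= M.
Proof.
  intros HM [Hd _] Hs0 Hwp. pose proof (condM_wgood _ _ HM) as Hw.
  destruct (wv_pos_int _ _ HM) as [Hp E].
  set (a := 2 * s0). assert (Ha : 0 < a < 1) by (unfold a; lra).
  set (b := Rpower (w 1) (2 * s0 - 1)).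
  assert (Hb : 0 <= b) by (left; apply exp_pos).
  assert (Hw1 : 0 < w 1) by (apply Hwp; lra).
  apply (dom_bound _ (fun t => w t / t * ((Rpower (w t) (2 * s0 - 1) - Rpower (w 1) (2 * s0 - 1)) / (1 - 2 * s0)))
           (fun t => w t / t) (1 - 2 * s0) b); auto; try lra.
  - apply (gw_cont w _ _ _ 2 Hw Hwp (Lpw_good a Ha)).
  - intros v Hv. pose proof (Hwp v ltac:(lra)). pose proof (wle1 _ _ _ HM Hv).
    apply Rmult_le_pos; [apply Rdiv_le_0_compat; lra|].
    apply Rdiv_le_0_compat; [|lra]. unfold Rpower.
    assert (ln (w v) <= ln (w 1)) by (apply ln_le; lra).
    assert ((2 * s0 - 1) * ln (w 1) <= (2 * s0 - 1) * ln (w v)) by nra.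
    destruct (Req_dec ((2 * s0 - 1) * ln (w 1)) ((2 * s0 - 1) * ln (w v))) as [Eq|Ne]; [rewrite Eq; lra|].
    pose proof (exp_increasing ((2 * s0 - 1) * ln (w 1)) ((2 * s0 - 1) * ln (w v)) ltac:(lra)). lra.
  - apply Hd. lra.
  - intros v Hv. pose proof (Hwp v ltac:(lra)) as Hx. unfold gw.
    set (x := w v) in *.
    assert (Hle : Lpw a x <= Rpower x a).
    { unfold Lpw, Rpower. destruct (ln1p_ge x Hx).
      destruct (Req_dec (a * (ln x - ln (1 + x))) (a * ln x)) as [Eq|Ne]; [rewrite Eq; lra|].
      left. apply exp_increasing. nra. }
    assert (Ex : Rpower x a = x * Rpower x (a - 1)).
    { replace a with (1 + (a - 1)) at 1 by ring. rewrite Rpower_plus, Rpower_1 by lra. reflexivity. }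
    apply Rle_trans with (Rpower x a / v).
    { unfold Rdiv. apply Rmult_le_compat_r; [left; apply Rinv_0_lt_compat; lra| exact Hle]. }
    right. rewrite Ex. unfold a. unfold b. field. lra.
Qed.

Lemma int_log iota w : cond_M iota w -> dini2s (1/2) w -> (forall x, 0 < x -> 0 < w x) ->
  exists M, forall e, 0 < e < 1 -> RInt (gw Llg w) e 1 <= M.
Proof.
  intros HM [_ Hd] Hwp. pose proof (condM_wgood _ _ HM) as Hw.
  destruct (wv_pos_int _ _ HM) as [Hp E].
  assert (Hw1 : 0 < w 1) by (apply Hwp; lra).
  set (b := 1 + w 1 + Rabs (ln (w 1))).
  assert (Hb : 0 <= b) by (unfold b; pose proof (Rabs_pos (ln (w 1))); lra).
  apply (dom_bound _ (fun t => w t / t * ln (w 1 / w t)) (fun t => w t / t) 1 b); auto; try lra.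
  - apply (gw_cont w _ _ _ 3 Hw Hwp Llg_good).
  - intros v Hv. pose proof (Hwp v ltac:(lra)). pose proof (wle1 _ _ _ HM Hv).
    apply Rmult_le_pos; [apply Rdiv_le_0_compat; lra|].
    rewrite <- ln_1. apply ln_le; [lra|].
    apply Rmult_le_reg_r with (w v); [lra|]. unfold Rdiv. rewrite Rmult_assoc, Rinv_l by lra. lra.
  - intros v Hv. pose proof (Hwp v ltac:(lra)) as Hx. pose proof (wle1 _ _ _ HM Hv) as Hx1. unfold gw.
    set (x := w v) in *. set (w1 := w 1) in *.
    destruct (ln1p_ge x Hx).
    assert (Hl1 : ln (1 + x) <= x).
    { pose proof (exp_ineq1_le x). assert (ln (1 + x) <= ln (exp x)) by (apply ln_le; lra). rewrite ln_exp in H2. lra. }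
    assert (Hdv : ln (w1 / x) = ln w1 - ln x) by (apply ln_div; lra).
    assert (Hle : Llg x <= x * ln (w1 / x) + b * x).
    { unfold Llg, b. assert (x / (1 + x) <= x).
      { apply Rmult_le_reg_r with (1 + x); [lra|]. unfold Rdiv. rewrite Rmult_assoc, Rinv_l by lra. nra. }
      assert (x / (1 + x) * (1 + ln (1 + x) - ln x) <= x * (1 + ln (1 + x) - ln x)).
      { apply Rmult_le_compat_r; lra. }
      pose proof (Rle_abs (- ln w1)) as Hab. rewrite Rabs_Ropp in Hab.
      assert (x * (1 + ln (1 + x) - ln x) <= x * ln (w1 / x) + (1 + w1 + Rabs (ln w1)) * x).
      { rewrite Hdv. assert (ln (1 + x) <= w1) by lra. nra. }
      lra. }
    replace (1 * (x / v * ln (w1 / x)) + b * (x / v)) with ((x * ln (w1 / x) + b * x) / v) by (field; lra).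
    unfold Rdiv. apply Rmult_le_compat_r; [left; apply Rinv_0_lt_compat; lra| exact Hle].
Qed.

Lemma w_small iota w : cond_M iota w -> exists d, 0 < d /\ forall y, 0 <= y < d -> w y <= 1.
Proof.
  intros HM. destruct HM as (Hc&_&_&_&_&H0&_).
  specialize (Hc 0 (Rle_refl 0) (ball (w 0) (mkposreal 1 Rlt_0_1)) (locally_ball _ _)).
  destruct Hc as [d Hd]. exists d. split; [destruct d; simpl; lra|].
  intros y Hy. assert (ball 0 d y).
  { unfold ball; simpl; unfold AbsRing_ball, abs, minus, plus, opp; simpl.
    rewrite Ropp_0, Rplus_0_r, Rabs_right; lra. }
  specialize (Hd y H ltac:(simpl; lra)).
  unfold ball in Hd; simpl in Hd; unfold AbsRing_ball, abs, minus, plus, opp in Hd; simpl in Hd.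
  rewrite H0 in Hd. apply Rabs_def2 in Hd. lra.
Qed.

Lemma rpow_ge_self u i : 0 < u <= 1 -> 0 < i < 1 -> u <= Rpower u i.
Proof.
  intros Hu Hi. rewrite <- (Rpower_1 u) at 1 by lra. unfold Rpower.
  assert (ln u <= 0) by (rewrite <- ln_1; apply ln_le; lra).
  assert (1 * ln u <= i * ln u) by nra.
  destruct (Req_dec (1 * ln u) (i * ln u)) as [->|]; [lra|]. left; apply exp_increasing; lra.
Qed.

Lemma C_main iota s0 w C L L1 L2 cL cg :
  0 < s0 < 1 -> 0 < iota -> iota < Rmin s0 (1/3) -> cond_M iota w -> 0 < C ->
  (forall x, 0 < x -> 0 < w x) -> Lgood L L1 L2 cL -> Lspec s0 L cg ->
  exists t0 A, 0 < t0 /\ 0 <= A /\ forall s, s0 <= s < 1 -> forall t u, 0 < t < t0 -> 0 <= u -> u * w u = t ->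
    (s <> 1/2 -> C * (Rpower t s + w t + (Rpower (w u) (2*s) - w u) / (1 - 2*s)) <= A * L (w (sqrt t))) /\
    (s = 1/2 -> C * (Rpower t (1/2) + w t + w u * ln (1 / w u)) <= A * L (w (sqrt t))).
Proof.
  intros Hs0 Hi Hi2 HM HC Hwp HL [Hcg HS].
  assert (Hi3 : iota < s0 /\ iota < 1/3).
  { split; [apply Rlt_le_trans with (Rmin s0 (1/3)); [lra|apply Rmin_l]|].
    apply Rlt_le_trans with (Rmin s0 (1/3)); [lra|apply Rmin_r]. }
  pose proof (condM_wgood _ _ HM) as Hw. pose proof Hw as (Hwn&Hwm&_&Hw0&_).
  destruct (w_small _ _ HM) as [d [Hd Hds]].
  pose proof HM as (_&_&_&_&_&_&_&_&[t0w [Ht0w [Hni _]]]).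
  set (t1 := Rmin (Rmin (d / 2) (t0w / 2)) (1/2)).
  assert (Ht1 : 0 < t1) by (unfold t1; repeat apply Rmin_pos; lra).
  assert (Ht1a : t1 <= d / 2 /\ t1 <= t0w / 2 /\ t1 <= 1/2).
  { unfold t1. pose proof (Rmin_l (Rmin (d / 2) (t0w / 2)) (1/2)). pose proof (Rmin_r (Rmin (d / 2) (t0w / 2)) (1/2)).
    pose proof (Rmin_l (d / 2) (t0w / 2)). pose proof (Rmin_r (d / 2) (t0w / 2)). lra. }
  assert (Hwt1 : 0 < w t1) by (apply Hwp; lra).
  assert (Hrt1 : 0 < Rpower t1 iota) by (unfold Rpower; apply exp_pos).
  set (c0 := w t1 / Rpower t1 iota).
  assert (Hc0 : 0 < c0) by (apply Rdiv_lt_0_compat; lra).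
  assert (Hlow : forall v, 0 < v <= t1 -> c0 * Rpower v iota <= w v).
  { intros v Hv. pose proof (Hni v t1 ltac:(simpl; lra) ltac:(simpl; lra) ltac:(lra)) as H. simpl in H.
    assert (0 < Rpower v iota) by (unfold Rpower; apply exp_pos).
    unfold c0. apply Rmult_le_reg_r with (/ Rpower v iota); [apply Rinv_0_lt_compat; lra|].
    replace (w t1 / Rpower t1 iota * Rpower v iota * / Rpower v iota) with (w t1 / Rpower t1 iota) by (field; lra).
    exact H. }
  assert (Hsc : 0 < sqrt c0) by (apply sqrt_lt_R0; lra).
  set (K := 1 + / sqrt c0).
  assert (HK : 1 <= K) by (unfold K; pose proof (Rinv_0_lt_compat _ Hsc); lra).
  set (A := C * cg * (/ c0 + 1 + K)).
  assert (HA : 0 <= A).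
  { unfold A. pose proof (Rinv_0_lt_compat _ Hc0). apply Rmult_le_pos; [apply Rmult_le_pos|]; lra. }
  set (t0 := Rmin (t1 * t1) (t1 * w t1)).
  assert (Ht0 : 0 < t0) by (unfold t0; apply Rmin_pos; nra).
  assert (Ht0a : t0 <= t1 * t1 /\ t0 <= t1 * w t1) by (unfold t0; split; [apply Rmin_l|apply Rmin_r]).
  exists t0, A. split; [exact Ht0|]. split; [exact HA|].
  intros s Hs t u Ht Hu Hut.
  destruct (sq t ltac:(lra)) as [S1 S2]. set (r := sqrt t) in *.
  assert (Hr : r < t1) by (destruct (Rlt_or_le r t1); auto; nra).
  assert (Hu0 : 0 < u).
  { destruct (Req_dec u 0) as [->|]; [rewrite Rmult_0_l in Hut; lra|lra]. }
  assert (Hut1 : u < t1).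
  { destruct (Rlt_or_le u t1) as [|Hge]; auto.
    assert (w t1 <= w u) by (apply Hwm; simpl; lra). nra. }
  set (X := w r). set (Y := w u).
  assert (HX : 0 < X <= 1) by (split; [apply Hwp; lra| apply Hds; lra]).
  assert (HY : 0 < Y <= 1) by (split; [apply Hwp; lra| apply Hds; lra]).
  assert (Hur : u <= K * r).
  { assert (c0 * Rpower u iota <= Y) by (apply Hlow; lra).
    pose proof (rpow_ge_self u iota ltac:(lra) ltac:(lra)).
    assert (c0 * u <= Y) by (pose proof (Rmult_le_compat_l c0 _ _ ltac:(lra) H0); lra).
    assert (c0 * (u * u) <= t).
    { rewrite <- Hut. fold Y. replace (c0 * (u * u)) with (u * (c0 * u)) by ring.
      apply Rmult_le_compat_l; lra. }
    assert (u * u <= (r / sqrt c0) * (r / sqrt c0)).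
    { replace ((r / sqrt c0) * (r / sqrt c0)) with (t / c0).
      - apply Rmult_le_reg_l with c0; [lra|]. replace (c0 * (t / c0)) with t by (field; lra). lra.
      - rewrite <- S2, <- (sqrt_sqrt c0) at 1 by lra. field. lra. }
    assert (u <= r / sqrt c0).
    { destruct (Rle_or_lt u (r / sqrt c0)); auto.
      assert (0 < r / sqrt c0) by (apply Rdiv_lt_0_compat; lra). nra. }
    unfold K. replace ((1 + / sqrt c0) * r) with (r + r / sqrt c0) by (field; lra). lra. }
  assert (HYX : Y <= K * X).
  { apply Rle_trans with (w (K * r)).
    - apply Hwm; simpl; nra.
    - apply wgood_scale; auto; lra. }
  assert (HLY : L Y <= K * L X).
  { apply Rle_trans with (L (K * X)).
    - apply (Lmono L L1 L2 cL); auto; lra.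
    - pose proof (Lratio L L1 L2 cL X (K * X) HL ltac:(lra) ltac:(nra)) as HR.
      apply Rmult_le_reg_r with (/ (K * X)); [apply Rinv_0_lt_compat; nra|].
      replace (K * L X * / (K * X)) with (L X / X) by (field; lra). exact HR. }
  assert (Htl1 : t < 1) by nra.
  assert (Hts : forall s', iota / 2 <= s' -> Rpower t s' <= X / c0).
  { intros s' Hs'. assert (Hlt : ln t < 0) by (rewrite <- ln_1; apply ln_increasing; lra).
    assert (Hlr : ln t = 2 * ln r) by (rewrite <- S2, ln_mult by lra; ring).
    assert (Rpower t s' <= Rpower r iota).
    { unfold Rpower. rewrite Hlr.
      destruct (Req_dec (s' * (2 * ln r)) (iota * ln r)) as [->|]; [lra|].
      left. apply exp_increasing. nra. }
    assert (c0 * Rpower r iota <= X) by (apply Hlow; lra).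
    apply Rle_trans with (Rpower r iota); auto.
    apply Rmult_le_reg_l with c0; [lra|]. replace (c0 * (X / c0)) with X by (field; lra). lra. }
  assert (Hwt : w t <= X) by (apply Hwm; simpl; nra).
  destruct (HS X HX) as [HX1 _].
  destruct (HS Y HY) as [_ [HY2 HY3]].
  assert (HLX0 : 0 <= L X) by (destruct HL as (_&_&_&_&Hb&_); apply Hb; lra).
  assert (Hmain : forall G, G <= cg * L Y -> forall s', iota / 2 <= s' ->
    C * (Rpower t s' + w t + G) <= A * L X).
  { intros G HG s' Hs'. specialize (Hts s' Hs').
    assert (Rpower t s' + w t + G <= cg * (/ c0 + 1 + K) * L X).
    { assert (X / c0 <= cg * / c0 * L X).
      { unfold Rdiv. replace (cg * / c0 * L X) with ((cg * L X) * / c0) by ring.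
        apply Rmult_le_compat_r; [left; apply Rinv_0_lt_compat; lra|lra]. }
      assert (cg * L Y <= cg * (K * L X)) by (apply Rmult_le_compat_l; lra).
      replace (cg * (/ c0 + 1 + K) * L X) with (cg * / c0 * L X + cg * L X + cg * (K * L X)) by ring.
      lra. }
    unfold A. replace (C * cg * (/ c0 + 1 + K) * L X) with (C * (cg * (/ c0 + 1 + K) * L X)) by ring.
    apply Rmult_le_compat_l; lra. }
  split.
  - intros Hs2. apply Hmain; [apply HY2; auto|]. lra.
  - intros Hs2. apply Hmain; [apply HY3; lra|]. lra.
Qed.

Definition Goal_concl (s0 : R) (w : R -> R) (C : R) : Prop :=
  exists t0, 0 < t0 /\
    forall s, s0 <= s < 1 ->
      exists z : R -> R,
        (forall t, 0 <= t -> 0 <= z t) /\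
        cont_on_nonneg z /\
        Ck_on 2 z (fun t => 0 < t) /\
        Ck_on 3 z (fun t => 0 < t < 2) /\
        condZ0 z /\ condZ1 z /\ condZ2 z /\ condZ3 z /\ condZ4 s z /\
        (forall t u, 0 < t < t0 -> 0 <= u -> u * w u = t ->
           (s <> 1/2 ->
              C * (Rpower t s + w t + (Rpower (w u) (2*s) - w u) / (1 - 2*s))
                <= t * Derive z t) /\
           (s = 1/2 ->
              C * (Rpower t (1/2) + w t + w u * ln (1 / w u))
                <= t * Derive z t)).

Lemma zero_partA : partA (fun _ => 0) (fun _ => 0) (fun _ => 0) (fun _ => 0).
Proof.
  split; [|split; [|split; [|split; [|split; [|split; [|split; [|split; [|split; [|split; [|split]]]]]]]]]].
  - reflexivity.
  - intros e He. exists 1. split; [lra|]. intros. rewrite Rabs_R0. lra.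
  - intros t Ht. eapply dext; [apply dcst|]. simpl. unfold Rdiv. ring.
  - intros; apply dcst.
  - intros; apply dcst.
  - intros; apply continuous_const.
  - intros; lra.
  - intros; lra.
  - intros x y Hx Hxy. unfold Rdiv. rewrite !Rmult_0_l. lra.
  - intros; lra.
  - exists 1, (1/2). split; [lra|]. split; [lra|]. intros. lra.
  - exists 0. intros. lra.
Qed.

Lemma fin_degen s0 iota w C : 0 < s0 -> cond_M iota w -> (forall x, 0 <= x -> w x = 0) -> Goal_concl s0 w C.
Proof.
  intros Hs0 HM Hz. exists 1. split; [lra|]. intros s Hs.
  exists (zfun (fun _ => 0)).
  assert (Hs' : 0 < s < 1) by lra.
  destruct (partA_main _ _ _ _ s zero_partA Hs') as (P1&P2&P3&P4&P5&P6&P7&P8&P9&_).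
  repeat (split; [assumption|]).
  intros t u Ht Hu Hut. rewrite (Hz u Hu), Rmult_0_r in Hut. lra.
Qed.

Lemma fin_nondeg s0 iota w C L L1 L2 cL cg :
  0 < s0 < 1 -> 0 < iota -> iota < Rmin s0 (1/3) -> cond_M iota w -> 0 < C ->
  (forall x, 0 < x -> 0 < w x) -> Lgood L L1 L2 cL -> Lspec s0 L cg ->
  (exists M, forall e, 0 < e < 1 -> RInt (gw L w) e 1 <= M) ->
  Goal_concl s0 w C.
Proof.
  intros Hs0 Hi Hi2 HM HC Hwp HL HS HB.
  destruct (C_main iota s0 w C L L1 L2 cL cg Hs0 Hi Hi2 HM HC Hwp HL HS) as [t0 [A [Ht0 [HA Hmain]]]].
  exists t0. split; [exact Ht0|]. intros s Hs.
  pose proof (B_partA iota w L L1 L2 cL A HM Hwp HL HA HB) as HP.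
  exists (zfun (zwB A L w)).
  destruct (partA_main _ _ _ _ s HP ltac:(lra)) as (P1&P2&P3&P4&P5&P6&P7&P8&P9&P10).
  repeat (split; [assumption|]).
  intros t u Ht Hu Hut.
  rewrite (P10 t ltac:(lra)). unfold QB.
  assert (0 <= t / (1 + t)) by (apply Rdiv_le_0_compat; lra).
  destruct (Hmain s Hs t u Ht Hu Hut) as [M1 M2].
  split; intros Hs2; [specialize (M1 Hs2)|specialize (M2 Hs2)]; lra.
Qed.

Theorem lemma5p7 (s0 iota : R) (w : R -> R) (C : R) :
  0 < s0 < 1 ->
  0 < iota -> iota < Rmin s0 (1/3) ->
  cond_M iota w ->
  dini2s s0 w ->
  0 < C ->
  exists t0, 0 < t0 /\
    forall s, s0 <= s < 1 ->
      exists z : R -> R,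
        (forall t, 0 <= t -> 0 <= z t) /\
        cont_on_nonneg z /\
        Ck_on 2 z (fun t => 0 < t) /\
        Ck_on 3 z (fun t => 0 < t < 2) /\
        condZ0 z /\ condZ1 z /\ condZ2 z /\ condZ3 z /\ condZ4 s z /\
        (* u plays the role of f^{-1}(t), where f(u) = u * w(u) *)
        (forall t u, 0 < t < t0 -> 0 <= u -> u * w u = t ->
           (s <> 1/2 ->
              C * (Rpower t s + w t + (Rpower (w u) (2*s) - w u) / (1 - 2*s))
                <= t * Derive z t) /\
           (s = 1/2 ->
              C * (Rpower t (1/2) + w t + w u * ln (1 / w u))
                <= t * Derive z t)).
Proof.
  intros Hs0 Hi Hi2 HM HD HC.
  change (Goal_concl s0 w C).
  destruct (wgood_degen _ _ HM) as [Hz|Hwp].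
  - apply (fin_degen s0 iota w C); auto; lra.
  - destruct (Rtotal_order s0 (1/2)) as [Hlt|[Heq|Hgt]].
    + apply (fin_nondeg s0 iota w C (Lpw (2 * s0)) (Lpw1 (2 * s0)) (Lpw2 (2 * s0)) 2 (2 + 4 / (1 - 2 * s0))); auto.
      * apply Lpw_good. lra.
      * apply Lpw_spec. lra.
      * apply (int_pow iota w s0); auto. lra.
    + subst s0. apply (fin_nondeg (1/2) iota w C Llg Llg1 Llg2 3 2); auto.
      * apply Llg_good.
      * apply Llg_spec.
      * apply (int_log iota w); auto.
    + apply (fin_nondeg s0 iota w C Llin Llin1 Llin2 2 (2 + 2 / (2 * s0 - 1))); auto.
      * apply Llin_good.
      * apply Llin_spec. lra.
      * apply (int_lin iota w); auto.
Qed.
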